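(* Let $\mathcal{R}$ be a cyclic proof system induced by a trace interpretation $\iota\colon\mathcal{R}\to\mathcal{T}_\mathcal{A}$ for a (finite) activation algebra $\mathcal{A}$. Then $\mathit{strip}\colon\mathrm{R}(\mathcal{R})\to\mathcal{R}$ is a proof morphism; in particular, if $\Pi$ is a proof of $\Gamma;(\Theta,\sigma)$ in $\mathrm{R}(\mathcal{R})$, then $\mathit{strip}(\Pi)$ is a proof of $\Gamma$ in $\mathcal{R}$.
   Context: An activation algebra $\mathcal{A}=(A,\le,\vee,0,\alpha)$ is a finite join-semilattice with least element $0$ and distinguished $\alpha\neq0$; $\mathcal{T}_\mathcal{A}$ has finite sets as objects, relations $R\subseteq X\times A\times Y$ as morphisms $X\to Y$, composition $R'\circ R=\{(x,c,z)\mid\exists y,a,b:(x,a,y)\in R,(y,b,z)\in R',a\vee b=c\}$, identities $\{(x,0,x)\}$. A composable sequence $(\tau_i)$ satisfies the trace condition if there are $k_0<k_1<\cdots$ and $s_i\in\mathrm{dom}(\tau_{k_i})$ with $(s_i,\alpha,s_{i+1})\in\tau_{k_{i+1}-1}\circ\cdots\circ\tau_{k_i}$ for all $i$. Cyclic trees: a tree is a nonempty prefix-closed $T\subseteq\omega^*$ ($\le$ prefix order, $\mathrm{Chld}(t)=\{ti\in T\}$). A cyclic tree $(T,\beta)$: finite tree and partial map $\beta$ from leaves to inner nodes with $\beta(t)<t$; $t\in\mathrm{dom}(\beta)$ are buds, $\beta(t)$ companions. A branch is $\pi\in T^\omega$ with $\pi_0=\varepsilon$, $\pi_{i+1}\in\mathrm{Chld}(\pi_i)$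 if $\pi_i$ is not a leaf, and $\pi_i$ a bud with $\pi_{i+1}=\beta(\pi_i)$ if $\pi_i$ is a leaf. Derivation systems: a set $\textsc{Seq}$ of sequents, a set of rules, each rule $R$ having a conclusion and premises $(\Gamma,\Delta_1,\dots,\Delta_n)$. A preproof is $(C,\lambda,\delta)$ with $C=(T,\beta)$ a cyclic tree, $\lambda\colon T\to\textsc{Seq}$ with $\lambda(t)=\lambda(\beta(t))$ for buds, and partial $\delta$ from non-bud nodes to rules such that each non-bud $t$ is either an open leaf (not in $\mathrm{dom}(\delta)$) or $\delta(t)$ has conclusion $\lambda(t)$ and premises $\lambda(t1),\dots,\lambda(tn)$ where $\mathrm{Chld}(t)=\{t1,\dots,tn\}$. A cyclic proof system is a derivation system with a designated set of assumption-free preproofs (proofs). A trace interpretation $\iota\colon\mathcal{R}\to\mathcal{T}_\mathcal{A}$ assigns each sequent an object $\iota(\Gamma)$ and each rule $R$ with conclusion $\Gamma$ and premises $\Delta_i$ morphisms $r_i\colon\iota(\Gamma)\to\iota(\Delta_i)$; the induced cyclic proof system $\iota(\mathcal{R})$ takes as proofs the assumption-free preproofs such that along every branch $\pi$ the sequence of morphisms ($\delta(\pi_i)_j$ when $\pi_{i+1}=\pi_ij$, identity when $\pi_{i+1}=\beta(\pi_i)$) satisfies the trace condition. A preproof morphism $f\colon\mathcal{R}\to\mathcal{R}'$ maps sequents to sequents and each $\mathcal{R}$-rule with conclusion $\Gamma$ and premises $\Delta_i$ to an $\mathcal{R}'$-preproof with endsequent $f(\Gamma)$ and open leaves $f(\Delta_1),\dots,f(\Delta_n)$;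 it translates an $\mathcal{R}$-preproof $\Pi$ to the $\mathcal{R}'$-preproof $f(\Pi)$ obtained by replacing each rule application by its assigned preproof (composing at open leaves) and keeping bud–companion links. It is a proof morphism if $f(\Pi)$ is a proof whenever $\Pi$ is. Safra boards: with a fixed countable chip set $\mathcal{C}\supseteq\omega$, a Safra board on finite $X$ is $(\Theta,\sigma)$, $\Theta\subseteq\mathcal{C}$ finite linearly ordered (control), $\sigma\colon X\times A\to\mathcal{P}(\mathcal{P}(\Theta))$ with every chip in some stack; $\gamma$ covered iff it is the maximum of no stack. Transitions: $r$-successor for $r\colon X\to Y$ (move stacks: $\sigma^*(y,a)=\{S\in\sigma(x,b)\mid(x,c,y)\in r,\ a=b\vee c\}$; then for every $y$ with $\sigma^*(y,\alpha)\ne\emptyset$ add a fresh chip $\iota(y)\notin\Theta$ (distinct for distinct $y$, ordered above all old chips) on top of every stack in $\sigma^*(y,\alpha)$ and move these stacks to $(y,0)$, leaving $(y,\alpha)$ empty; control = old chips still occurring followed by the new chips); weakening (remove some stacks); population (add the empty stack to some positions $(x,0)$); $\gamma$-reset for covered $\gamma$ (replace every stack $S\ni\gamma$ by $\{z\in S\mid z\le\gamma\}$); in each case the new control consists of the chips still occurring, in the inherited order. Reset proof system $\mathrm{R}(\mathcal{R})$: sequents $\Gamma;(\Theta,\sigma)$ with $\Gamma\in\textsc{Seq}$ and $(\Theta,\sigma)$ a board on $\iota(\Gamma)$. Rules: structural rules Weak, $\textsc{Reset}_\gamma$, Pop with conclusion $\Gamma;(\Theta,\sigma)$ and one premise $\Gamma;(\Theta',\sigma')$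 where $(\Theta',\sigma')$ arises by weakening, $\gamma$-reset, or population; and for every $\mathcal{R}$-rule $R$ (conclusion $\Gamma$, premises $\Delta_i$, maps $r_i$) and board $(\Theta,\sigma)$ on $\iota(\Gamma)$, a rule with conclusion $\Gamma;(\Theta,\sigma)$ and premises $\Delta_i;(\Theta_i,\sigma_i)$, $(\Theta_i,\sigma_i)$ an $r_i$-successor of $(\Theta,\sigma)$. For a bud $t$, let $\Theta$ be the longest common prefix of the controls on the path from $\beta(t)$ to $t$; an invariant is a nonempty prefix $\theta$ of $\Theta$ such that $\textsc{Reset}_{\max(\theta)}$ is applied on that path. An assumption-free $\mathrm{R}(\mathcal{R})$-preproof is a proof iff every bud's path has an invariant. The preproof morphism $\mathit{strip}\colon\mathrm{R}(\mathcal{R})\to\mathcal{R}$ maps $\Gamma;(\Theta,\sigma)\mapsto\Gamma$, maps each structural rule to the one-node preproof of $\Gamma$ (open leaf), and maps each annotated copy of an $\mathcal{R}$-rule $R$ to the one-step preproof applying $R$. Thus $\mathit{strip}(\Pi)$ erases annotations and contracts structural-rule steps. *)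

(* Defs.v *)
From Stdlib Require Import List.
From mathcomp Require Import all_boot finmap.
Set Implicit Arguments.
Unset Strict Implicit.
Unset Printing Implicit Defensive.
Local Open Scope fset_scope.

(* Activation algebras: finite join-semilattice with least element 0   *)
(* and a distinguished alpha <> 0.  (The order is a <= b :<-> a \/ b = b;
   0 least means 0 \/ a = a.)                                            *)
Record ActAlg := {
  acar :> Type;
  ajoin : acar -> acar -> acar;
  azero : acar;
  aalpha : acar;
  ajoinA : forall a b c, ajoin a (ajoin b c) = ajoin (ajoin a b) c;
  ajoinC : forall a b, ajoin a b = ajoin b a;
  ajoinI : forall a, ajoin a a = a;
  ajoin0 : forall a, ajoin azero a = a;
  aalpha_neq0 : aalpha <> azero;
  afinite : exists l : list acar, forall a, In a l
}.

Record DerivSys := {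
  dseq : Type;
  drule : Type;
  dconcl : drule -> dseq;
  darity : drule -> nat;
  dprem : drule -> nat -> dseq
}.

(* Tree nodes are words over omega; the i-th child of t is rcons t i
   (children of a node with an n-premise rule are t0,...,t(n-1)). *)
Notation node := (seq nat).

Record preproof (D : DerivSys) := {
  ptree : node -> Prop;
  pbud  : node -> option node;
  plab  : node -> dseq D;
  prule : node -> option (drule D)
}.

Section Preproofs.
Variable D : DerivSys.
Variable P : preproof D.

Definition is_leaf (t : node) : Prop :=
  ptree P t /\ forall i, ~ ptree P (rcons t i).

Definition strict_prefix (s t : node) : Prop := prefix s t /\ s <> t.

Definition is_preproof : Prop :=
  ptree P [::] /\
  (forall t i, ptree P (rcons t i) -> ptree P t) /\
  (exists l : seq node, forall t, ptree P t -> t \in l) /\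
  (forall t s, pbud P t = Some s ->
     is_leaf t /\ ptree P s /\ ~ is_leaf s /\ strict_prefix s t /\
     plab P t = plab P s) /\
  (forall t R, prule P t = Some R ->
     ptree P t /\ pbud P t = None /\ dconcl R = plab P t /\
     (forall i, ptree P (rcons t i) <-> i < darity R) /\
     (forall i, i < darity R -> plab P (rcons t i) = dprem R i)) /\
  (forall t, ptree P t -> pbud P t = None -> prule P t = None -> is_leaf t).

Definition assumption_free : Prop :=
  forall t, ptree P t -> pbud P t = None -> prule P t <> None.

Definition is_branch (pi : nat -> node) : Prop :=
  pi 0 = [::] /\
  forall i,
    (~ is_leaf (pi i) -> exists j, pi i.+1 = rcons (pi i) j /\ ptree P (pi i.+1)) /\
    (is_leaf (pi i) -> pbud P (pi i) = Some (pi i.+1)).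

End Preproofs.

(* Trace interpretations iota : R -> T_A.  Objects iota(Gamma) are finite
   subsets of a universe Pos; morphisms are relations in Pos x A x Pos
   with domain iota(concl) and codomain iota(prem i).                   *)
Record TraceInterp (D : DerivSys) (A : ActAlg) := {
  Pos : Type;
  iobj : dseq D -> Pos -> Prop;
  iobj_fin : forall G, exists l : list Pos, forall x, iobj G x -> In x l;
  imor : drule D -> nat -> Pos -> A -> Pos -> Prop;
  imor_dom : forall R i x a y, imor R i x a y ->
     i < darity R /\ iobj (dconcl R) x /\ iobj (dprem R i) y
}.

Arguments iobj {D A} _ _ _.
Arguments imor {D A} _ _ _ _ _ _.
Arguments Pos {D A} _.

Section TraceCond.
Variables (A : ActAlg) (Pos : Type).
Variable dom : nat -> Pos -> Prop.
Variable tau : nat -> Pos -> A -> Pos -> Prop.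

(* segcomp m n = tau_(m+n-1) o ... o tau_m  (identity if n = 0) *)
Fixpoint segcomp (m n : nat) (x : Pos) (c : A) (z : Pos) : Prop :=
  match n with
  | 0 => x = z /\ c = azero A
  | n'.+1 => exists y a b, segcomp m n' x a y /\ tau (m + n') y b z /\
                           c = ajoin a b
  end.

Definition trace_cond : Prop :=
  exists (k : nat -> nat) (s : nat -> Pos),
    (forall i, k i < k i.+1) /\
    forall i, dom (k i) (s i) /\
              segcomp (k i) (k i.+1 - k i) (s i) (aalpha A) (s i.+1).
End TraceCond.

Section TraceProofs.
Variables (D : DerivSys) (A : ActAlg) (I : TraceInterp D A).
Variable P : preproof D.

Definition branch_dom (pi : nat -> node) (i : nat) : Pos I -> Prop :=
  iobj I (plab P (pi i)).

Definition branch_mor (pi : nat -> node) (i : nat) (x : Pos I) (a : A)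
    (y : Pos I) : Prop :=
  (exists j R, pi i.+1 = rcons (pi i) j /\ prule P (pi i) = Some R /\
               imor I R j x a y) \/
  (pbud P (pi i) = Some (pi i.+1) /\ x = y /\ a = azero A /\
   iobj I (plab P (pi i)) x).

Definition trace_proof : Prop :=
  is_preproof P /\ assumption_free P /\
  forall pi, is_branch P pi -> trace_cond (branch_dom pi) (branch_mor pi).
End TraceProofs.

(* Safra boards.  Chips are natural numbers (C = omega).  A board is a
   control Theta (a duplicate-free list, its order being the linear order
   on the control) and sigma : X x A -> P(P(Theta)).                     *)
Record board (Pos : Type) (A : Type) := {
  ctrl : seq nat;
  stk : Pos -> A -> {fset {fset nat}}
}.

Section Boards.
Variables (Pos : Type) (A : ActAlg).
Implicit Types (b : board Pos A) (X : Pos -> Prop).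

Definition occurs b (z : nat) : Prop :=
  exists x a S, S \in stk b x a /\ z \in S.

Definition board_on X b : Prop :=
  uniq (ctrl b) /\
  (forall x a, ~ X x -> stk b x a = fset0) /\
  (forall x a S, S \in stk b x a -> forall z, z \in S -> z \in ctrl b) /\
  (forall z, z \in ctrl b -> occurs b z).

Definition chip_le (Th : seq nat) (z g : nat) : bool := index z Th <= index g Th.

Definition is_max (Th : seq nat) (g : nat) (S : {fset nat}) : Prop :=
  g \in S /\ forall z, z \in S -> chip_le Th z g.

Definition covered b (g : nat) : Prop :=
  g \in ctrl b /\ forall x a S, S \in stk b x a -> ~ is_max (ctrl b) g S.

Definition restricted_ctrl (Th : seq nat) b' (Th' : seq nat) : Prop :=
  subseq Th' Th /\ forall z, z \in Th' <-> (z \in Th /\ occurs b' z).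

Definition weakening b b' : Prop :=
  (forall x a, fsubset (stk b' x a) (stk b x a)) /\
  restricted_ctrl (ctrl b) b' (ctrl b').

Definition population b b' : Prop :=
  (forall x a, a <> azero A -> stk b' x a = stk b x a) /\
  (forall x, stk b' x (azero A) = stk b x (azero A) \/
             stk b' x (azero A) = stk b x (azero A) `|` [fset fset0]) /\
  restricted_ctrl (ctrl b) b' (ctrl b').

Definition trunc (Th : seq nat) (g : nat) (S : {fset nat}) : {fset nat} :=
  if g \in S then [fset z in S | chip_le Th z g] else S.

Definition reset (g : nat) b b' : Prop :=
  (forall x a, stk b' x a = [fset trunc (ctrl b) g S | S in stk b x a]) /\
  restricted_ctrl (ctrl b) b' (ctrl b').

Definition successor (r : Pos -> A -> Pos -> Prop) b b' : Prop :=
  exists (sstar : Pos -> A -> {fset {fset nat}}) (nu : Pos -> nat)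
         (old newc : seq nat),
    (forall y a S, S \in sstar y a <->
        exists x bb c, S \in stk b x bb /\ r x c y /\ a = ajoin bb c) /\
    (forall y, sstar y (aalpha A) != fset0 -> nu y \notin ctrl b) /\
    (forall y1 y2, sstar y1 (aalpha A) != fset0 -> sstar y2 (aalpha A) != fset0 ->
        nu y1 = nu y2 -> y1 = y2) /\
    (forall y a, a <> aalpha A -> a <> azero A -> stk b' y a = sstar y a) /\
    (forall y, stk b' y (aalpha A) = fset0) /\
    (forall y, stk b' y (azero A) =
        sstar y (azero A) `|` [fset S `|` [fset nu y] | S in sstar y (aalpha A)]) /\
    restricted_ctrl (ctrl b) b' old /\
    uniq newc /\
    (forall z, z \in newc <-> exists y, sstar y (aalpha A) != fset0 /\ z = nu y) /\
    ctrl b' = old ++ newc.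
End Boards.

Section ResetSystem.
Variables (D : DerivSys) (A : ActAlg) (I : TraceInterp D A).

Definition Board := board (Pos I) A.
Definition RSeq := (dseq D * Board)%type.

Inductive RRaw :=
  | RWeak  of dseq D & Board & Board
  | RReset of nat & dseq D & Board & Board
  | RPop   of dseq D & Board & Board
  | RAnn   of drule D & Board & seq Board.

Definition rraw_concl (r : RRaw) : RSeq :=
  match r with
  | RWeak G b _ | RReset _ G b _ | RPop G b _ => (G, b)
  | RAnn R b _ => (dconcl R, b)
  end.

Definition rraw_arity (r : RRaw) : nat :=
  match r with
  | RAnn R _ _ => darity R
  | _ => 1
  end.

Definition rraw_prem (r : RRaw) (i : nat) : RSeq :=
  match r with
  | RWeak G _ b' | RReset _ G _ b' | RPop G _ b' => (G, b')
  | RAnn R b bs => (dprem R i, nth b bs i)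
  end.

Definition rraw_valid (r : RRaw) : Prop :=
  match r with
  | RWeak G b b' => board_on (iobj I G) b /\ board_on (iobj I G) b' /\
                    weakening b b'
  | RReset g G b b' => board_on (iobj I G) b /\ board_on (iobj I G) b' /\
                       covered b g /\ reset g b b'
  | RPop G b b' => board_on (iobj I G) b /\ board_on (iobj I G) b' /\
                   population b b'
  | RAnn R b bs => board_on (iobj I (dconcl R)) b /\ size bs = darity R /\
      forall i, i < darity R ->
        board_on (iobj I (dprem R i)) (nth b bs i) /\
        successor (imor I R i) b (nth b bs i)
  end.

Definition RRule := {r : RRaw | rraw_valid r}.

Definition RSys : DerivSys := {|
  dseq := RSeq;
  drule := RRule;
  dconcl := fun r => rraw_concl (proj1_sig r);
  darity := fun r => rraw_arity (proj1_sig r);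
  dprem := fun r => rraw_prem (proj1_sig r)
|}.

Definition is_structural (r : RRaw) : Prop :=
  match r with RAnn _ _ _ => False | _ => True end.

Definition is_reset_of (g : nat) (r : RRaw) : Prop :=
  match r with RReset g' _ _ _ => g' = g | _ => False end.

Section ResetProofs.
Variable P : preproof RSys.

Definition on_path (s t u : node) : Prop := prefix s u /\ prefix u t.

Definition is_lcp (s t : node) (Th : seq nat) : Prop :=
  (forall u, ptree P u -> on_path s t u -> prefix Th (ctrl (plab P u).2)) /\
  (forall Th', (forall u, ptree P u -> on_path s t u ->
                 prefix Th' (ctrl (plab P u).2)) -> prefix Th' Th).

Definition has_invariant (t s : node) : Prop :=
  exists Th, is_lcp s t Th /\
  exists th, th <> [::] /\ prefix th Th /\
    exists u r, ptree P u /\ prefix s u /\ strict_prefix u t /\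
      prule P u = Some r /\ is_reset_of (last 0 th) (proj1_sig r).

Definition reset_proof : Prop :=
  is_preproof P /\ assumption_free P /\
  forall t s, pbud P t = Some s -> has_invariant t s.

(* strip: contraction of structural steps.  contract t u : the node t of
   P corresponds to the node u of strip(P) (digits taken at structural
   nodes are erased). *)
Definition struct_node (t : node) : Prop :=
  exists r, prule P t = Some r /\ is_structural (proj1_sig r).

Inductive contract : node -> node -> Prop :=
  | contract_nil : contract [::] [::]
  | contract_struct t u i : contract t u -> struct_node t ->
      contract (rcons t i) u
  | contract_ann t u i : contract t u -> ~ struct_node t ->
      contract (rcons t i) (rcons u i).

Definition unann (r : RRule) : option (drule D) :=
  match proj1_sig r with RAnn R _ _ => Some R | _ => None end.

Definition is_strip (P' : preproof D) : Prop :=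
  (forall u, ptree P' u <-> exists t, ptree P t /\ contract t u) /\
  (forall t u, ptree P t -> ~ struct_node t -> contract t u ->
     plab P' u = (plab P t).1 /\
     prule P' u = obind unann (prule P t) /\
     (pbud P t = None -> pbud P' u = None) /\
     (forall s, pbud P t = Some s ->
        exists s', contract s s' /\ pbud P' u = Some s')) /\
  (forall u, ~ ptree P' u -> pbud P' u = None /\ prule P' u = None).

End ResetProofs.
End ResetSystem.

(* Main.v *)
Require Import Defs.
From Stdlib Require Import List ClassicalEpsilon.
From mathcomp Require Import all_boot finmap zify.
Set Implicit Arguments.
Unset Strict Implicit.
Unset Printing Implicit Defensive.
Local Open Scope fset_scope.

Lemma ajoin_0r (A : ActAlg) (a : A) : ajoin a (azero A) = a.
Proof. by rewrite ajoinC ajoin0. Qed.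

Lemma xm (P : Prop) : P \/ ~ P.
Proof. by case: (excluded_middle_informative P); [left|right]. Qed.

Lemma index_filter_le (s : seq nat) (p : pred nat) (z w : nat) :
  uniq s -> z \in filter p s -> w \in filter p s ->
  (index z (filter p s) <= index w (filter p s)) = (index z s <= index w s).
Proof.
elim: s => [|x s IH] //= /andP[xs us].
case px: (p x) => /=.
  rewrite !inE => zs ws.
  case: (eqVneq x z) => [e|zx]; first by subst z.
  case: (eqVneq x w) => [e|wx]; first by subst w.
  rewrite ltnS IH //.
    by move: zs; rewrite eq_sym (negbTE zx).
  by move: ws; rewrite eq_sym (negbTE wx).
move=> zs ws.
have /negbTE -> : x != z by apply/eqP=> e; move: zs; rewrite -e mem_filter px.
have /negbTE -> : x != w by apply/eqP=> e; move: ws; rewrite -e mem_filter px.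
by rewrite ltnS IH.
Qed.

Lemma chip_le_subseq (Th Th' : seq nat) z w :
  uniq Th -> subseq Th' Th -> z \in Th' -> w \in Th' ->
  chip_le Th' z w = chip_le Th z w.
Proof.
move=> u /(subseq_uniqP u) e; rewrite /chip_le e => zi wi.
by rewrite index_filter_le // -e.
Qed.

Lemma chip_le_cat (Th old newc : seq nat) z w :
  uniq Th -> subseq old Th -> z \in old -> w \in old ->
  chip_le (old ++ newc) z w = chip_le Th z w.
Proof.
move=> u s zi wi; rewrite /chip_le !index_cat zi wi.
exact: (chip_le_subseq u s zi wi).
Qed.

Lemma chip_le_antisym (Th : seq nat) z w :
  z \in Th -> chip_le Th z w -> chip_le Th w z -> z = w.
Proof.
rewrite /chip_le => zi h1 h2.
have e : index z Th = index w Th by apply/eqP; rewrite eqn_leq h1 h2.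
have wi : w \in Th by rewrite -index_mem -e index_mem.
by rewrite -(nth_index 0 zi) e nth_index.
Qed.

Section Seg.
Variables (A : ActAlg) (Pos : Type) (tau : nat -> Pos -> A -> Pos -> Prop).

Lemma seg0 m x : segcomp tau m (m - m) x (azero A) x.
Proof. by rewrite subnn. Qed.

Lemma seg_ext m n y v x c z : m <= n -> segcomp tau m (n - m) y v x ->
  tau n x c z -> segcomp tau m (n.+1 - m) y (ajoin v c) z.
Proof.
move=> mn h t; rewrite subSn //=; exists x, v, c; split => //.
by rewrite subnKC.
Qed.
End Seg.

Lemma in_subfset (S : {fset nat}) (P : nat -> bool) z :
  (z \in [fset w in S | P w]) = (z \in S) && P z.
Proof. by rewrite !inE. Qed.

Lemma is_max_tr (Q : seq nat) Th Th' g (S : {fset nat}) :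
  {subset S <= Q} ->
  (forall z w, z \in Q -> w \in Q -> chip_le Th' z w = chip_le Th z w) ->
  (is_max Th' g S <-> is_max Th g S).
Proof.
move=> sq e; rewrite /is_max; split=> -[gS h]; split=> // z zS.
  by rewrite -e ?sq //; exact: h.
by rewrite e ?sq //; exact: h.
Qed.

Lemma rc_le Th (Pos : Type) (A : ActAlg) (b' : board Pos A) Th' z w :
  uniq Th -> restricted_ctrl Th b' Th' -> z \in Th' -> w \in Th' ->
  chip_le Th' z w = chip_le Th z w.
Proof. move=> u [s _]; exact: chip_le_subseq. Qed.

Section BoardFacts.
Variables (Pos : Type) (A : ActAlg).
Implicit Types (b : board Pos A) (X : Pos -> Prop).

Lemma bon_dom X b x a S : board_on X b -> S \in stk b x a -> X x.
Proof.
move=> [_ [h _]] Si; case: (xm (X x)) => // nx.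
by move: Si; rewrite (h x a nx).
Qed.

Lemma bon_chip X b x a S z : board_on X b -> S \in stk b x a -> z \in S -> z \in ctrl b.
Proof. move=> [_ [_ [h _]]] Si zS; exact: (h x a S Si z zS). Qed.

Lemma bon_occ X b z : board_on X b -> z \in ctrl b ->
  exists x a S, S \in stk b x a /\ z \in S.
Proof. move=> [_ [_ [_ h]]] /h [x [a [S [h1 h2]]]]; by exists x, a, S. Qed.

Lemma bon_uniq X b : board_on X b -> uniq (ctrl b).
Proof. by case. Qed.
End BoardFacts.


Lemma php (X : Type) (l : list X) (R : X -> nat -> Prop) :
  (forall k, exists y, In y l /\ R y k) ->
  (forall y k k', k' <= k -> R y k -> R y k') ->
  exists y, In y l /\ forall k, R y k.
Proof.
elim: l => [|h t IH] H mono.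
  by have [y [[] _]] := H 0.
case: (xm (forall k, R h k)) => [all|nall].
  by exists h; split=> //; left.
case: (xm (exists k0, ~ R h k0)) => [[k0 nk0]|nex]; last first.
  by exfalso; apply: nall => k; case: (xm (R h k)) => // nk; exfalso; apply: nex; exists k.
have [y [yt Ry]] : exists y, In y t /\ forall k, R y k.
  apply: IH => // k.
  have [y [[ey|yt] Ry]] := H (maxn k k0).
    by exfalso; apply: nk0; subst y; apply: (mono _ _ _ _ Ry); exact: leq_maxr.
  by exists y; split=> //; apply: (mono _ _ _ _ Ry); exact: leq_maxl.
by exists y; split=> //; right.
Qed.

Section Konig.
Variables (X : Type) (L : nat -> X -> Prop) (E : X -> X -> Prop).
Hypothesis Lfin : forall j, exists l, forall x, L j x -> In x l.
Hypothesis Lpred : forall j x, L j.+1 x -> exists y, L j y /\ E y x.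
Hypothesis Lne : forall j, exists x, L j x.

Fixpoint BT (j : nat) (x : X) (k : nat) (z : X) : Prop :=
  match k with
  | 0 => x = z /\ L j x
  | k'.+1 => exists y, BT j x k' y /\ E y z /\ L (j + k'.+1) z
  end.

Lemma BT_L j x k z : BT j x k z -> L j x.
Proof. elim: k z => [|k IH] z /=; [by case | by move=> [y [h _]]; exact: IH h]. Qed.

Lemma BT_back k : forall j z, L (j + k) z -> exists x, BT j x k z.
Proof.
elim: k => [|k IH] j z.
  by rewrite addn0 => h; exists z.
move=> Lz; move: (Lz); rewrite addnS => /Lpred [y [Ly Ey]].
have [x hx] := IH _ _ Ly.
by exists x, y.
Qed.

Lemma BT_front k : forall j x z, BT j x k.+1 z -> exists y, E x y /\ BT j.+1 y k z.
Proof.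
elim: k => [|k IH] j x z.
  move=> [y [[<- Lx] [Ez Lz]]]; exists z; split=> //; split=> //.
  by rewrite -addn1.
move=> [w [hw [Ew Lz]]].
have [y [Exy hy]] := IH _ _ _ hw.
exists y; split=> //; exists w; split=> //; split=> //.
by rewrite addSnnS.
Qed.

Lemma BT_trunc k : forall k' j x z, k' <= k -> BT j x k z -> exists z', BT j x k' z'.
Proof.
elim: k => [|k IH] k' j x z.
  by rewrite leqn0 => /eqP-> h; exists z.
rewrite leq_eqVlt => /orP[/eqP-> h|]; first by exists z.
rewrite ltnS => lk [y [hy _]]; exact: IH lk hy.
Qed.

Definition Inf j x := forall k, exists z, BT j x k z.

Lemma Inf_step j x : Inf j x -> exists y, E x y /\ Inf j.+1 y.
Proof.
move=> hi; have [l hl] := Lfin j.+1.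
have [y [_ hy]] : exists y, In y l /\ forall k, E x y /\ exists z, BT j.+1 y k z.
  apply: php.
    move=> k; have [z hz] := hi k.+1.
    have [y [Exy hy]] := BT_front hz.
    exists y; split; last by split=> //; exists z.
    by apply: hl; exact: BT_L hy.
  move=> y k k' kk [Exy [z hz]]; split=> //; exact: BT_trunc kk hz.
exists y; split; first by case: (hy 0).
by move=> k; case: (hy k).
Qed.

Lemma Inf_start : exists x, Inf 0 x.
Proof.
have [l hl] := Lfin 0.
have [x [_ hx]] : exists x, In x l /\ forall k, exists z, BT 0 x k z.
  apply: php.
    move=> k; have [z hz] := Lne k.
    have [x hx] := BT_back (j := 0) (k := k) (z := z) hz.
    by exists x; split; [apply: hl; exact: BT_L hx | exists z].
  move=> y k k' kk [z hz]; exact: BT_trunc kk hz.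
by exists x.
Qed.

Definition x0K := proj1_sig (constructive_indefinite_description _ Inf_start).
Lemma x0KP : Inf 0 x0K.
Proof. exact: proj2_sig (constructive_indefinite_description _ Inf_start). Qed.

Definition nxtK j (x : {x | Inf j x}) : {y | E (proj1_sig x) y /\ Inf j.+1 y} :=
  constructive_indefinite_description _ (Inf_step (proj2_sig x)).

Fixpoint sqK j : {x | Inf j x} :=
  match j with
  | 0 => exist _ x0K x0KP
  | j'.+1 => let y := nxtK (sqK j') in exist _ (proj1_sig y) (proj2 (proj2_sig y))
  end.

Theorem konig : exists f : nat -> X, forall j, L j (f j) /\ E (f j) (f j.+1).
Proof.
exists (fun j => proj1_sig (sqK j)) => j; split.
  by have [z hz] := proj2_sig (sqK j) 0; case: hz.
by rewrite /=; case: (proj2_sig (nxtK (sqK j))).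
Qed.
End Konig.
Section Core.
Variables (A : ActAlg) (Pos : Type).
Variable dom : nat -> Pos -> Prop.
Hypothesis dom_fin : forall n, exists l, forall x, dom n x -> In x l.
Variable b : nat -> board Pos A.
Hypothesis bon : forall n, board_on (dom n) (b n).
Variable tau : nat -> Pos -> A -> Pos -> Prop.
Definition Tid n := forall x c y, tau n x c y <-> (x = y /\ c = azero A /\ dom n x).
Hypothesis hstep : forall n,
  (Tid n /\ (b n.+1 = b n \/ weakening (b n) (b n.+1) \/ population (b n) (b n.+1) \/
             exists g, covered (b n) g /\ reset g (b n) (b n.+1)))
  \/ successor (tau n) (b n) (b n.+1).
Variables (g0 : nat) (N : nat).
Hypothesis gin : forall n, N <= n -> g0 \in ctrl (b n).
Definition isR n := Tid n /\ covered (b n) g0 /\ reset g0 (b n) (b n.+1).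
Hypothesis io : forall M, exists n, M <= n /\ N <= n /\ isR n.

Definition Anc n x a S' := exists x' a' c S, S \in stk (b n) x' a' /\ tau n x' c x /\
  a = ajoin a' c /\ g0 \in S /\
  (is_max (ctrl (b n.+1)) g0 S' <-> is_max (ctrl (b n)) g0 S).

Definition NewC n y (a : A) S' := exists x bb c S0, a = azero A /\ S0 \in stk (b n) x bb /\
  tau n x c y /\ aalpha A = ajoin bb c /\ g0 \in S0 /\ ~ is_max (ctrl (b n.+1)) g0 S'.

Lemma anc_id n x a S' : Tid n -> S' \in stk (b n) x a ->
  (is_max (ctrl (b n.+1)) g0 S' <-> is_max (ctrl (b n)) g0 S') -> g0 \in S' ->
  Anc n x a S'.
Proof.
move=> T Si e gS; exists x, a, (azero A), S'; split=> //; split.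
  by apply/T; split=> //; split=> //; exact: bon_dom (bon n) Si.
by rewrite ajoin_0r.
Qed.

Lemma anc_or_new n : N <= n -> ~ isR n -> forall x a S',
  S' \in stk (b n.+1) x a -> g0 \in S' -> Anc n x a S' \/ NewC n x a S'.
Proof.
move=> Nn nR x a S' Si gS.
have gb : g0 \in ctrl (b n) by exact: gin.
have gb' : g0 \in ctrl (b n.+1) by apply: gin; exact: leqW.
have ub := bon_uniq (bon n).
have chb' : {subset S' <= ctrl (b n.+1)} by move=> z; exact: bon_chip (bon n.+1) Si.
case: (hstep n) => [[T [e|[[sub rc]|[[p1 [p2 rc]]|[g [cov [rs rc]]]]]]]|].
- left; rewrite e in Si *; apply: anc_id => //; by rewrite e.
- left; have Si0 : S' \in stk (b n) x a by exact: (fsubsetP (sub x a)).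
  apply: anc_id => //; apply: (is_max_tr (Q := ctrl (b n.+1))) => // z w zi wi.
  exact: rc_le rc zi wi.
- left; have Si0 : S' \in stk (b n) x a.
    case: (xm (a = azero A)) => [ea|na]; last by rewrite -p1.
    subst a; case: (p2 x) => e; first by rewrite -e.
    move: Si; rewrite e in_fsetU in_fset1 => /orP[//|/eqP e']; by rewrite e' in gS.
  apply: anc_id => //; apply: (is_max_tr (Q := ctrl (b n.+1))) => // z w zi wi.
  exact: rc_le rc zi wi.
- left; have gc : g \in ctrl (b n) by case: cov.
  have ng : g <> g0.
    move=> eg; apply: nR; split=> //; split; [by rewrite -eg | by rewrite -eg; split].
  move: Si; rewrite rs => /imfsetP [S /= SS eS].
  exists x, a, (azero A), S; split=> //; split.
    by apply/T; split=> //; split=> //; exact: bon_dom (bon n) SS.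
  split; first by rewrite ajoin_0r.
  move: eS gS; rewrite /trunc; case: ifP => gS0 eS gS.
    + have g0S' := gS.
      rewrite eS in_subfset in gS; case/andP: gS => g0S lg.
      split=> //; split=> -[_ h]; exfalso.
      * have gS' : g \in S' by rewrite eS in_subfset gS0 /chip_le leqnn.
        have : chip_le (ctrl (b n.+1)) g g0 by exact: h.
        rewrite (rc_le ub rc) ?chb' //.
        move=> lg'.
        by apply: ng; exact: (chip_le_antisym gc lg' lg).
      * have : chip_le (ctrl (b n)) g g0 by exact: h.
        move=> lg'; by apply: ng; exact: (chip_le_antisym gc lg' lg).
    + rewrite eS in gS *; split=> //.
      apply: (is_max_tr (Q := ctrl (b n.+1))) => //; first by rewrite -eS.
      move=> z w zi wi; exact: rc_le rc zi wi.
- move=> [sstar [nu [old [newc [hs [hfr [hinj [h1 [h2 [h3 [rc [un [hn ec]]]]]]]]]]]]].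
  have oldsub : subseq old (ctrl (b n)) by case: rc.
  have inold z : z \in ctrl (b n) -> z \in ctrl (b n.+1) -> z \in old.
    move=> zb; rewrite ec mem_cat => /orP[//|/hn [y [ne ez]]].
    by move: (hfr y ne); rewrite -ez zb.
  have anc x' bb c : S' \in stk (b n) x' bb -> tau n x' c x -> a = ajoin bb c -> Anc n x a S'.
    move=> SS t ea; exists x', bb, c, S'; split=> //; split=> //; split=> //; split=> //.
    apply: (is_max_tr (Q := old)).
      by move=> z zS; apply: inold; [exact: bon_chip (bon n) SS zS | exact: chb'].
    by move=> z w zi wi; rewrite ec; exact: chip_le_cat.
  case: (xm (a = aalpha A)) => [ea|na].
    by move: Si; rewrite ea h2 in_fset0.
  case: (xm (a = azero A)) => [ez|nz]; last first.
    left; move: Si; rewrite h1 // => /hs [x' [bb [c [SS [t ea]]]]]; exact: anc SS t ea.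
  move: Si; rewrite ez h3 in_fsetU => /orP[/hs [x' [bb [c [SS [t ea]]]]]|].
    by left; rewrite -ez; apply: (anc _ _ _ SS t); rewrite ez.
  move=> /imfsetP [S0 /= S0i eS]; right.
  have ne : sstar x (aalpha A) != fset0 by apply/eqP=> e; move: S0i; rewrite e.
  move: S0i => /hs [x' [bb [c [SS [t ea]]]]].
  have nub : nu x \notin ctrl (b n) by exact: hfr.
  exists x', bb, c, S0; split=> //; split=> //; split=> //; split=> //; split.
    move: gS; rewrite eS in_fsetU in_fset1 => /orP[//|/eqP e].
    by move: nub; rewrite -e gb.
  move=> [_ h].
  have nuS : nu x \in S' by rewrite eS in_fsetU in_fset1 eqxx orbT.
  have := h _ nuS; rewrite /chip_le ec !index_cat.
  have -> : nu x \in old = false.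
    apply/negbTE; apply: contra nub => nio; exact: (mem_subseq oldsub).
  rewrite (inold _ gb gb').
  have : index g0 old < size old by rewrite index_mem; exact: inold.
  move=> lt le; have := leq_trans (leq_addr _ _) le; by rewrite leqNgt lt.
Qed.

Definition isRb m : bool := if excluded_middle_informative (isR m) then true else false.
Lemma isRbP m : isRb m = true <-> isR m.
Proof. by rewrite /isRb; case: excluded_middle_informative. Qed.

Fixpoint cnt n := if n is m.+1 then (cnt m + ((N <= m) && isRb m))%N else 0.

Lemma cnt_mono m n : m <= n -> cnt m <= cnt n.
Proof.
elim: n => [|n IH]; first by rewrite leqn0 => /eqP->.
rewrite leq_eqVlt => /orP[/eqP->//|]; rewrite ltnS => /IH h /=.
exact: leq_trans h (leq_addr _ _).
Qed.

Lemma cnt_pos n : 0 < cnt n -> N < n.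
Proof.
elim: n => [|n IH] //=.
case: (boolP ((N <= n) && isRb n)) => [/andP[h _] _|_]; first by rewrite ltnS.
rewrite addn0 => /IH; exact: ltnW.
Qed.

Fixpoint Good (j : nat) (p : nat * Pos) : Prop :=
  cnt p.1 = j.+1 /\ dom p.1 p.2 /\
  (if j is j'.+1 then exists q, Good j' q /\ q.1 < p.1 /\
       segcomp tau q.1 (p.1 - q.1) q.2 (aalpha A) p.2 else True).

Definition Wit j n x (a : A) := exists q v, Good j q /\ q.1 <= n /\
  segcomp tau q.1 (n - q.1) q.2 v x /\ (v = a \/ v = ajoin (aalpha A) a).

Definition Inv n := forall x a S, S \in stk (b n) x a -> g0 \in S ->
  (is_max (ctrl (b n)) g0 S -> forall j, cnt n = j.+2 -> Wit j n x a) /\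
  (~ is_max (ctrl (b n)) g0 S -> forall j, cnt n = j.+1 -> Wit j n x a).

Lemma wit_ext j n x' a' c x a : Wit j n x' a' -> tau n x' c x -> a = ajoin a' c ->
  Wit j n.+1 x a.
Proof.
move=> [q [v [G [qn [sg ev]]]]] t ea; exists q, (ajoin v c); split=> //.
split; first exact: leqW.
split; first exact: (seg_ext qn sg t).
case: ev => ev; rewrite ev.
  by left; rewrite ea.
by right; rewrite ea ajoinA.
Qed.

Lemma wit_alpha j n x' bb c x : Wit j n x' bb -> tau n x' c x -> aalpha A = ajoin bb c ->
  exists q, Good j q /\ q.1 <= n /\ segcomp tau q.1 (n.+1 - q.1) q.2 (aalpha A) x.
Proof.
move=> [q [v [G [qn [sg ev]]]]] t ea; exists q; split=> //; split=> //.
have -> : aalpha A = ajoin v c.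
  by case: ev => ->; rewrite // -ajoinA -ea ajoinI.
exact: (seg_ext qn sg t).
Qed.

Lemma Inv_step n : Inv n -> Inv n.+1.
Proof.
move=> IH x a S' Si gS.
case: (boolP ((N <= n) && isRb n)) => [/andP[Nn /isRbP [T [cov [rs rc]]]]|nc].
  have ec : cnt n.+1 = (cnt n).+1 by rewrite /= Nn /= (proj2 (isRbP n)) ?addn1 //; split.
  have Si0 := Si; move: Si0; rewrite rs => /imfsetP [S /= SS eS].
  have g0S : g0 \in S by move: gS; rewrite eS /trunc; case: ifP => // h; rewrite h.
  have eS' : S' = [fset z in S | chip_le (ctrl (b n)) z g0] by rewrite eS /trunc g0S.
  have ub := bon_uniq (bon n).
  have ism : is_max (ctrl (b n.+1)) g0 S'.
    split=> // z zS; rewrite (rc_le ub rc) //; last by exact: bon_chip (bon n.+1) Si gS.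
      by move: zS; rewrite eS' in_subfset => /andP[].
    exact: bon_chip (bon n.+1) Si zS.
  split; last by [].
  have ec2 : (cnt n + ((N <= n) && isRb n))%N = (cnt n).+1 by exact: ec.
  move=> _ j; rewrite ?ec ?ec2 => -[cj].
  have nm : ~ is_max (ctrl (b n)) g0 S by case: cov => _ h; exact: (h _ _ _ SS).
  have w := (proj2 (IH _ _ _ SS g0S) nm j cj).
  apply: (@wit_ext j n x a (azero A) x a w); last by rewrite ajoin_0r.
  by apply/T; split=> //; split=> //; exact: bon_dom (bon n) SS.
have ec : cnt n.+1 = cnt n by rewrite /= (negbTE nc) addn0.
case: (posnP (cnt n)) => [c0|cp].
  by split=> ? j; rewrite ec c0.
have Nn : N <= n by exact: ltnW (cnt_pos cp).
have nR : ~ isR n by move=> h; move: nc; rewrite Nn (proj2 (isRbP n) h).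
case: (anc_or_new Nn nR Si gS) => [[x' [a' [c [S [SS [t [ea [gS0 ei]]]]]]]]|].
  rewrite ec; split.
    move=> m j cj; apply: (wit_ext _ t ea); apply: (proj1 (IH _ _ _ SS gS0)) => //; exact/ei.
  move=> m j cj; apply: (wit_ext _ t ea); apply: (proj2 (IH _ _ _ SS gS0)) => // h; by apply/m/ei.
move=> [x' [bb [c [S0 [ez [S0i [t [ea [g0S0 nm]]]]]]]]].
split=> // _ j; rewrite ec => cj.
have dx : dom n.+1 x by exact: bon_dom (bon n.+1) Si.
have ecq : cnt (n.+1, x).1 = cnt n by exact: ec.
case: (xm (is_max (ctrl (b n)) g0 S0)) => [im|nim].
  case: j cj => [|j] cj.
    exists (n.+1, x), (azero A); split; first by split; [rewrite ecq | split].
    split=> //; split; first exact: seg0.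
    by left.
  have w := proj1 (IH _ _ _ S0i g0S0) im j cj.
  have [q [G [qn sg]]] := wit_alpha w t ea.
  exists (n.+1, x), (azero A); split.
    split; first by rewrite ecq.
    split=> //; exists q; split=> //.
  split=> //; split; first exact: seg0.
  by left.
have w := proj2 (IH _ _ _ S0i g0S0) nim j cj.
have [q [G [qn sg]]] := wit_alpha w t ea.
exists q, (aalpha A); split=> //; split; first exact: leqW.
split=> //; right; by rewrite ez ajoin_0r.
Qed.

Lemma Inv_all n : Inv n.
Proof.
elim: n => [|n IH]; last exact: Inv_step.
by move=> x a S _ _; split=> ? j.
Qed.

Lemma cnt_unb k : exists n, k <= cnt n.
Proof.
elim: k => [|k [n IH]]; first by exists 0.
have [m [nm [Nm Rm]]] := io n.
exists m.+1; rewrite /= Nm (proj2 (isRbP m) Rm) addn1 ltnS.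
exact: leq_trans IH (cnt_mono nm).
Qed.

Lemma level_ne j : exists q, Good j q.
Proof.
have ex : exists n, j.+2 <= cnt n by exact: cnt_unb.
case: (ex_minnP ex) => n1 h1 hmin.
case: n1 h1 hmin => [|m] h1 hmin; first by [].
have hm : ~~ (j.+2 <= cnt m) by apply/negP=> /hmin; rewrite ltnn.
move: h1 => /=; case: (boolP ((N <= m) && isRb m)) => [/andP[Nm /isRbP [T [cov rs]]]|_];
  last by rewrite addn0 => h; move: hm; rewrite h.
rewrite addn1 ltnS => hc.
have cm : cnt m = j.+1 by apply/eqP; rewrite eqn_leq hc andbT; move: hm; rewrite -ltnNge ltnS.
have [x [a [S [SS gS]]]] := bon_occ (bon m) (gin Nm).
have nm : ~ is_max (ctrl (b m)) g0 S by case: cov => _ h; exact: (h _ _ _ SS).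
have [q [v [G _]]] := proj2 (Inv_all SS gS) nm j cm.
by exists q.
Qed.

Definition lf m : seq Pos := proj1_sig (constructive_indefinite_description _ (dom_fin m)).
Lemma lfP m x : dom m x -> In x (lf m).
Proof. rewrite /lf; case: constructive_indefinite_description => l h; exact: h. Qed.

Lemma pts_fin T : exists l, forall q : nat * Pos, q.1 < T -> dom q.1 q.2 -> In q l.
Proof.
elim: T => [|T [l IH]]; first by exists nil.
exists (l ++ map (fun x => (T, x)) (lf T)) => q qT d.
apply/in_app_iff; move: qT; rewrite ltnS leq_eqVlt => /orP[/eqP e|qT]; last by left; exact: IH.
right; apply/in_map_iff; exists q.2; split; last by rewrite -e; exact: lfP.
by case: q e {d} => ? ? /= ->.
Qed.

Lemma Good_base j q : Good j q -> cnt q.1 = j.+1 /\ dom q.1 q.2.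
Proof. by case: j => [|j] [? [? _]]. Qed.

Lemma good_fin j : exists l, forall q, Good j q -> In q l.
Proof.
have [T hT] := cnt_unb j.+2.
have [l hl] := pts_fin T.
exists l => q /Good_base [cq d]; apply: hl => //.
rewrite ltnNge; apply/negP => /cnt_mono; rewrite cq => h.
by have := leq_trans hT h; rewrite ltnn.
Qed.

Theorem core_trace : trace_cond dom tau.
Proof.
have Lpred : forall j p, Good j.+1 p -> exists q, Good j q /\
    (q.1 < p.1 /\ segcomp tau q.1 (p.1 - q.1) q.2 (aalpha A) p.2).
  by move=> j p [cp [dp [q [Gq [qp sg]]]]]; exists q.
have [f hf] := @konig (nat * Pos) Good _ good_fin Lpred level_ne.
exists (fun i => (f i).1), (fun i => (f i).2); split.
  by move=> i; case: (hf i) => _ [].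
by move=> i; case: (hf i) => /Good_base [_ d] [_ sg]; split.
Qed.
End Core.

Local Close Scope fset_scope.

Lemma pre_cat (a r : node) : prefix a (a ++ r).
Proof. exact: prefix_prefix. Qed.

Lemma preE (a t : node) : prefix a t <-> exists r, t = a ++ r.
Proof. by split=> [/prefixP|h]; [|apply/prefixP]. Qed.

Lemma pre_rcons_inv (a w : node) j : prefix a (rcons w j) -> a = rcons w j \/ prefix a w.
Proof.
move=> /preE [r e]; case/lastP: r e => [|r k] e.
  by left; rewrite e cats0.
right; apply/preE; exists r; move: e; rewrite -rcons_cat => /eqP.
by rewrite eqseq_rcons => /andP[/eqP-> _].
Qed.

Lemma pre_comp (a b t : node) : prefix a t -> prefix b t -> prefix a b \/ prefix b a.
Proof.
rewrite !prefixE => /eqP ea /eqP eb.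
case: (leqP (size a) (size b)) => h.
  by left; apply/eqP; rewrite -eb take_takel // ea.
by right; apply/eqP; rewrite -ea take_takel ?eb // ltnW.
Qed.

Lemma pre_size (a b t : node) : prefix a t -> prefix b t -> size a = size b -> a = b.
Proof.
move=> ha hb e; case: (pre_comp ha hb) => /preE [r er].
  by move: e; rewrite er size_cat -{1}(addn0 (size a)) => /eqP; rewrite eqn_add2l eq_sym size_eq0 => /eqP->; rewrite cats0.
by move: e; rewrite er size_cat -{2}(addn0 (size b)) => /eqP; rewrite eqn_add2l size_eq0 => /eqP->; rewrite cats0.
Qed.

Lemma pre_size_le (a b : node) : prefix a b -> size a <= size b.
Proof. by move=> /preE [r ->]; rewrite size_cat leq_addr. Qed.

Lemma pre_antisym (a b : node) : prefix a b -> prefix b a -> a = b.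
Proof.
move=> h1 h2; apply: (pre_size h1 (prefix_refl b)).
by apply/eqP; rewrite eqn_leq !pre_size_le.
Qed.

Lemma strict_child (w t : node) : strict_prefix w t -> exists j, prefix (rcons w j) t.
Proof.
move=> [/preE [[|j r] e] ne]; first by exfalso; apply: ne; rewrite e cats0.
by exists j; apply/preE; exists r; rewrite cat_rcons.
Qed.

Lemma strict_rcons (a w : node) j : strict_prefix a (rcons w j) <-> prefix a w.
Proof.
split=> [[/pre_rcons_inv [//|//] ne]|h].
split; first exact: prefix_trans h (prefix_rcons _ _).
move=> e; have := pre_size_le h; rewrite e size_rcons ltnn //.
Qed.


Section Zb.
Variables (Pos : Type) (A : ActAlg).
Local Open Scope fset_scope.

Definition Zb (g : nat) (b : board Pos A) := forall x a S, S \in stk b x a -> g \in S ->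
  is_max (ctrl b) g S.

Lemma Z_reset g (b b' : board Pos A) X X' : board_on X b -> board_on X' b' ->
  reset g b b' -> Zb g b'.
Proof.
move=> bo bo' [rs rc] x a S' Si gS.
have ub := bon_uniq bo.
have Si0 := Si; move: Si0; rewrite rs => /imfsetP [S /= SS eS].
have g0S : g \in S by move: gS; rewrite eS /trunc; case: ifP => // h; rewrite h.
have eS' : S' = [fset z in S | chip_le (ctrl b) z g] by rewrite eS /trunc g0S.
split=> // z zS; rewrite (rc_le ub rc) //; last by exact: bon_chip bo' Si gS.
  by move: zS; rewrite eS' in_subfset => /andP[].
exact: bon_chip bo' Si zS.
Qed.

Lemma Z_step g (b b' : board Pos A) X X' : board_on X b -> board_on X' b' ->
  Zb g b ->
  (weakening b b' \/ population b b' \/ exists g', reset g' b b') -> Zb g b'.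
Proof.
move=> bo bo' Z h x a S' Si gS.
have ub := bon_uniq bo.
have chb' : {subset S' <= ctrl b'} by move=> z; exact: bon_chip bo' Si.
case: h => [[sub rc]|[[p1 [p2 rc]]|[g' [rs rc]]]].
- have Si0 : S' \in stk b x a by exact: (fsubsetP (sub x a)).
  have ord : forall z w, z \in ctrl b' -> w \in ctrl b' ->
      chip_le (ctrl b') z w = chip_le (ctrl b) z w.
    by move=> z w zi wi; exact: rc_le rc zi wi.
  apply: (proj2 (is_max_tr g chb' ord)); exact: Z Si0 gS.
- have Si0 : S' \in stk b x a.
    case: (xm (a = azero A)) => [ea|na]; last by rewrite -p1.
    subst a; case: (p2 x) => e; first by rewrite -e.
    move: Si; rewrite e in_fsetU in_fset1 => /orP[//|/eqP e']; by rewrite e' in gS.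
  have ord : forall z w, z \in ctrl b' -> w \in ctrl b' ->
      chip_le (ctrl b') z w = chip_le (ctrl b) z w.
    by move=> z w zi wi; exact: rc_le rc zi wi.
  apply: (proj2 (is_max_tr g chb' ord)); exact: Z Si0 gS.
- have Si0 := Si; move: Si0; rewrite rs => /imfsetP [S /= SS eS].
  have gS0 : g \in S by move: gS; rewrite eS /trunc; case: ifP => // h; rewrite in_subfset => /andP[].
  have [_ hm] := Z _ _ _ SS gS0.
  split=> // z zS; rewrite (rc_le ub rc) ?chb' //.
  apply: hm; move: zS; rewrite eS /trunc; case: ifP => _ //; rewrite in_subfset => /andP[] //.
Qed.
End Zb.

Section Main.
Variables (D : DerivSys) (A : ActAlg) (I : TraceInterp D A).
Variable P : preproof (RSys I).
Hypothesis RP : reset_proof P.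

Definition tr := ptree P.
Lemma PP : is_preproof P. Proof. by case: RP. Qed.
Lemma AF : assumption_free P. Proof. by case: RP => _ []. Qed.

Lemma tr_root : tr [::]. Proof. by case: PP. Qed.
Lemma tr_rcons t i : tr (rcons t i) -> tr t. Proof. by case: PP => _ [h _]; exact: h. Qed.
Lemma tr_pre s t : tr t -> prefix s t -> tr s.
Proof.
move=> ht /preE [r e]; subst t; elim/last_ind: r ht => [|r j IH]; first by rewrite cats0.
by rewrite -rcons_cat => /tr_rcons.
Qed.
Lemma tr_fin : exists l : seq node, forall t, tr t -> t \in l.
Proof. by case: PP => _ [_ [h _]]. Qed.
Lemma bud_spec t s : pbud P t = Some s ->
  is_leaf P t /\ tr s /\ ~ is_leaf P s /\ strict_prefix s t /\ plab P t = plab P s.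
Proof. by case: PP => _ [_ [_ [h _]]]; exact: h. Qed.
Lemma rule_spec t R : prule P t = Some R ->
  tr t /\ pbud P t = None /\ dconcl R = plab P t /\
  (forall i, tr (rcons t i) <-> i < darity R) /\
  (forall i, i < darity R -> plab P (rcons t i) = dprem R i).
Proof. by case: PP => _ [_ [_ [_ [h _]]]]; exact: h. Qed.

Lemma bud_tr t s : pbud P t = Some s -> tr t.
Proof. by move/bud_spec => [[]]. Qed.

Lemma bud_norule t s : pbud P t = Some s -> prule P t = None.
Proof.
move=> h; case e: (prule P t) => [R|] //.
by have [_ [e2 _]] := rule_spec e; rewrite e2 in h.
Qed.

Lemma tr_cases t : tr t -> (exists s, pbud P t = Some s) \/ (exists R, prule P t = Some R).
Proof.
move=> ht; case e: (pbud P t) => [s|]; first by left; exists s.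
case e2: (prule P t) => [R|]; first by right; exists R.
by exfalso; apply: (AF ht e).
Qed.

Lemma tr_depth : exists B, forall t, tr t -> size t <= B.
Proof.
have [l hl] := tr_fin; exists (\max_(w <- l) size w) => t /hl tl.
by rewrite (big_rem _ tl) /= leq_maxl.
Qed.

Definition sn t : bool := if excluded_middle_informative (struct_node P t) then true else false.
Lemma snP t : sn t <-> struct_node P t.
Proof. by rewrite /sn; case: excluded_middle_informative. Qed.
Lemma snF t : ~~ sn t <-> ~ struct_node P t.
Proof. rewrite /sn; case: excluded_middle_informative => //. Qed.

Lemma struct_arity t : struct_node P t ->
  (forall i, tr (rcons t i) <-> i = 0) /\ (plab P (rcons t 0)).1 = (plab P t).1.
Proof.
move=> [r [e st]]; have [_ [_ [ec [ch pl]]]] := rule_spec e.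
have ar : darity r = 1 by case: r e st ec ch pl => -[] //.
split.
  by move=> i; rewrite ch ar; split=> [|->]; [rewrite ltnS leqn0 => /eqP | ].
rewrite pl ?ar // -ec.
by case: r e st ec ch pl ar => -[].
Qed.

Fixpoint cfr (r : node) : node :=
  match r with
  | [::] => [::]
  | i :: r' => if sn (rev r') then cfr r' else rcons (cfr r') i
  end.
Definition cf t := cfr (rev t).

Lemma cf_nil : cf [::] = [::]. Proof. by []. Qed.
Lemma cf_rcons t i : cf (rcons t i) = if sn t then cf t else rcons (cf t) i.
Proof. by rewrite /cf rev_rcons /= revK. Qed.

Lemma contract_cf t : contract P t (cf t).
Proof.
elim/last_ind: t => [|t i IH]; first exact: contract_nil.
rewrite cf_rcons; case: (boolP (sn t)) => h.
  by apply: contract_struct => //; apply/snP.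
by apply: contract_ann => //; apply/snF.
Qed.

Lemma contract_fun t u : contract P t u -> u = cf t.
Proof.
elim=> [|t' u' i _ -> st|t' u' i _ -> st]; first by [].
  by rewrite cf_rcons (proj2 (snP t') st).
by rewrite cf_rcons; move/snF/negbTE: st => ->.
Qed.

Lemma cf_pre s t : prefix s t -> prefix (cf s) (cf t).
Proof.
move=> /preE [r ->]; elim/last_ind: r => [|r j IH]; first by rewrite cats0 prefix_refl.
rewrite -rcons_cat cf_rcons; case: ifP => _ //.
exact: prefix_trans IH (prefix_rcons _ _).
Qed.

Lemma cf_strict s t : prefix s t -> ~ struct_node P s -> s <> t -> size (cf s) < size (cf t).
Proof.
move=> hp ns ne; have [j hj] := strict_child (conj hp ne).
have := pre_size_le (cf_pre hj); rewrite cf_rcons; move/snF/negbTE: ns => ->.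
by rewrite size_rcons.
Qed.

Lemma cf_inj_aux r1 : forall w r2, tr (w ++ r1) -> tr (w ++ r2) ->
  ~ struct_node P (w ++ r1) -> ~ struct_node P (w ++ r2) ->
  cf (w ++ r1) = cf (w ++ r2) -> r1 = r2.
Proof.
elim: r1 => [|j1 r1 IH] w [|j2 r2] t1 t2 n1 n2 e //.
- have := cf_strict (pre_cat w (j2 :: r2)); rewrite cats0 in n1 e *.
  by rewrite e ltnn => /(_ n1); case=> // h; move: (f_equal size h); rewrite size_cat /= -{1}(addn0 (size w)) => /eqP; rewrite eqn_add2l.
- have := cf_strict (pre_cat w (j1 :: r1)); rewrite cats0 in n2 e *.
  by rewrite -e ltnn => /(_ n2); case=> // h; move: (f_equal size h); rewrite size_cat /= -{1}(addn0 (size w)) => /eqP; rewrite eqn_add2l.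
case: (eqVneq j1 j2) => [ej|nj].
  subst j2; congr (_ :: _); apply: (IH (rcons w j1)); by rewrite !cat_rcons.
exfalso.
have c1 : tr (rcons w j1) by apply: (tr_pre t1); apply/preE; exists r1; rewrite cat_rcons.
have c2 : tr (rcons w j2) by apply: (tr_pre t2); apply/preE; exists r2; rewrite cat_rcons.
case: (boolP (sn w)) => [/snP sw|nw].
  have [ch _] := struct_arity sw.
  by move: nj; rewrite (proj1 (ch _) c1) (proj1 (ch _) c2) eqxx.
have E j : cf (rcons w j) = rcons (cf w) j by rewrite cf_rcons (negbTE nw).
have p1 : prefix (rcons (cf w) j1) (cf (w ++ j1 :: r1)).
  by rewrite -E; apply: cf_pre; apply/preE; exists r1; rewrite cat_rcons.
have p2 : prefix (rcons (cf w) j2) (cf (w ++ j1 :: r1)).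
  by rewrite e -E; apply: cf_pre; apply/preE; exists r2; rewrite cat_rcons.
have := pre_size p1 p2; rewrite !size_rcons => /(_ erefl) /eqP.
by rewrite eqseq_rcons (negbTE nj) andbF.
Qed.

Lemma cf_inj t1 t2 : tr t1 -> tr t2 -> ~ struct_node P t1 -> ~ struct_node P t2 ->
  cf t1 = cf t2 -> t1 = t2.
Proof. move=> h1 h2 n1 n2 e; exact: (@cf_inj_aux t1 [::] t2). Qed.

Lemma rep t : tr t -> exists w, tr w /\ ~ struct_node P w /\ prefix t w /\ cf w = cf t /\
  (plab P w).1 = (plab P t).1 /\
  (forall v, prefix t v -> strict_prefix v w -> struct_node P v).
Proof.
have [B hB] := tr_depth.
suff : forall k t, B - size t <= k -> tr t -> exists w, tr w /\ ~ struct_node P w /\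
  prefix t w /\ cf w = cf t /\ (plab P w).1 = (plab P t).1 /\
  (forall v, prefix t v -> strict_prefix v w -> struct_node P v).
  by move=> h ht; exact: h _ _ (leqnn _) ht.
clear t; elim=> [|k IH] t hk ht;
  (case: (boolP (sn t)) => [/snP st|/snF nt]; last first).
- exists t; split=> //; split=> //; split; first exact: prefix_refl.
  split=> //; split=> // v h1 [h2 h3]; by exfalso; apply: h3; apply: pre_antisym.
- have [ch lab] := struct_arity st.
  have c0 : tr (rcons t 0) by exact/ch.
  have := hB _ c0; rewrite size_rcons => h.
  by move: hk; rewrite leqn0 subn_eq0 leqNgt h.
- exists t; split=> //; split=> //; split; first exact: prefix_refl.
  split=> //; split=> // v h1 [h2 h3]; by exfalso; apply: h3; apply: pre_antisym.
have [ch lab] := struct_arity st.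
have c0 : tr (rcons t 0) by exact/ch.
have hk' : B - size (rcons t 0) <= k.
  by rewrite size_rcons subnS; move: hk; case: (B - size t).
have [w [tw [nw [pw [cw [lw hw]]]]]] := IH (rcons t 0) hk' c0.
exists w; split=> //; split=> //; split; first exact: prefix_trans (prefix_rcons _ _) pw.
split; first by rewrite cw cf_rcons (proj2 (snP t) st).
split; first by rewrite lw lab.
move=> v tv [vw nvw].
case: (pre_comp vw pw) => h.
  case: (xm (v = rcons t 0)) => [e|ne].
    subst v; exact: (hw _ (prefix_refl _) (conj vw nvw)).
  have : strict_prefix v (rcons t 0) by [].
  by move/strict_rcons => vt; rewrite (pre_antisym vt tv).
exact: hw.
Qed.

Lemma chain_prefix s w t : tr w -> tr t -> prefix s w -> prefix s t ->
  (forall v, prefix s v -> strict_prefix v w -> struct_node P v) ->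
  prefix w t \/ strict_prefix t w.
Proof.
move=> tw tt sw st hs.
elim/last_ind: w tw sw hs => [|w j IH] tw sw hs.
  by left; move: sw; rewrite prefixs0 => /eqP e; rewrite -e.
case: (pre_rcons_inv sw) => [e|sw'].
  by left; rewrite -e.
have tw' := tr_rcons tw.
have hs' : forall v, prefix s v -> strict_prefix v w -> struct_node P v.
  move=> v h1 [h2 h3]; apply: hs h1 _; split; first exact: prefix_trans h2 (prefix_rcons _ _).
  by move=> e; have := pre_size_le h2; rewrite e size_rcons ltnn.
have sww : struct_node P w by apply: (hs _ sw'); apply/strict_rcons; exact: prefix_refl.
case: (IH tw' sw' hs') => [wt|[tw2 ne]].
  case: (xm (w = t)) => [e|ne].
    by right; rewrite -e; apply/strict_rcons; exact: prefix_refl.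
  have [k hk] := strict_child (conj wt ne).
  have [ch _] := struct_arity sww.
  have k0 : k = 0 by apply/ch; exact: tr_pre tt hk.
  have j0 : j = 0 by apply/ch.
  by left; rewrite j0 -k0.
by right; apply/strict_rcons.
Qed.

Lemma cf_rcons_inv t u i : tr t -> cf t = rcons u i ->
  exists t', tr (rcons t' i) /\ ~ struct_node P t' /\ cf t' = u /\ prefix (rcons t' i) t.
Proof.
elim/last_ind: t => [|t j IH] //; first by move=> _; case: u.
move=> ht; rewrite cf_rcons; case: (boolP (sn t)) => [_ e|/snF nt].
  have [t' [h1 [h2 [h3 h4]]]] := IH (tr_rcons ht) e.
  by exists t'; split=> //; split=> //; split=> //; exact: prefix_trans h4 (prefix_rcons _ _).
move/eqP; rewrite eqseq_rcons => /andP[/eqP e /eqP ej]; subst j.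
by exists t; split=> //; split=> //; split=> //; exact: prefix_refl.
Qed.

Definition brd t := (plab P t).2.
Definition sqt t := (plab P t).1.

Lemma rule_board t r : prule P t = Some r -> board_on (iobj I (sqt t)) (brd t).
Proof.
move=> e; have [_ [_ [ec _]]] := rule_spec e; rewrite /sqt /brd -ec.
by case: r {e ec} => -[G b b'|g G b b'|G b b'|R b bs] /= [].
Qed.

Lemma struct_board t : struct_node P t ->
  board_on (iobj I (sqt t)) (brd t) /\ board_on (iobj I (sqt t)) (brd (rcons t 0)) /\
  (weakening (brd t) (brd (rcons t 0)) \/ population (brd t) (brd (rcons t 0)) \/
   exists g, covered (brd t) g /\ reset g (brd t) (brd (rcons t 0)) /\
     forall r, prule P t = Some r -> is_reset_of g (proj1_sig r)).
Proof.
move=> st; have [ch lab] := struct_arity st.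
case: st => r [e st]; have [_ [_ [ec [_ pl]]]] := rule_spec e.
have pl0 := pl 0; rewrite /sqt /brd -ec pl0; last by case: r e st ec pl pl0 => -[].
case: r e st ec pl pl0 => -[G b b'|g G b b'|G b b'|R b bs] //= v e _ ec _ _.
- by have [h1 [h2 h3]] := v; split=> //; split=> //; left.
- have [h1 [h2 [h3 h4]]] := v; split=> //; split=> //; right; right; exists g.
  by split=> //; split=> // r; rewrite e => -[<-].
- by have [h1 [h2 h3]] := v; split=> //; split=> //; right; left.
Qed.

Lemma ann_board t r R bb bs : prule P t = Some r -> proj1_sig r = RAnn R bb bs ->
  plab P t = (dconcl R, bb) /\ (forall i, tr (rcons t i) <-> i < darity R) /\
  forall i, i < darity R -> plab P (rcons t i) = (dprem R i, nth bb bs i) /\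
    board_on (iobj I (dprem R i)) (nth bb bs i) /\ successor (imor I R i) bb (nth bb bs i).
Proof.
move=> e er; have [_ [_ [ec [ch pl]]]] := rule_spec e.
case: r e er ec ch pl => rr v /= e er ec ch pl.
clear e; move: v ec ch pl; rewrite er /= => v ec ch pl.
split; first by rewrite -ec.
split=> // i hi; rewrite pl //; split=> //.
by have [_ [_ h]] := v; exact: h.
Qed.

Lemma tr_board t : tr t -> board_on (iobj I (sqt t)) (brd t).
Proof.
move=> ht; case: (tr_cases ht) => [[s e]|[r e]]; last exact: rule_board e.
have [_ [ts [nl [_ el]]]] := bud_spec e.
rewrite /sqt /brd el; case: (tr_cases ts) => [[s' e']|[r e']]; last exact: rule_board e'.
by have [lf _] := bud_spec e'.
Qed.

Lemma pre_mem (a b : seq nat) z : prefix a b -> z \in a -> z \in b.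
Proof. by move=> /preE [r ->]; rewrite mem_cat => ->. Qed.

Lemma inv_data t s : pbud P t = Some s -> exists Th th u r,
  is_lcp P s t Th /\ th <> [::] /\ prefix th Th /\ tr u /\ prefix s u /\
  strict_prefix u t /\ prule P u = Some r /\ is_reset_of (last 0 th) (proj1_sig r).
Proof.
move=> e; case: RP => _ [_ h]; have [Th [lc [th [ne [pt [u [r [tu [su [ut [pr ir]]]]]]]]]]] := h _ _ e.
by exists Th, th, u, r.
Qed.

Lemma lcp_mem s t Th th w : is_lcp P s t Th -> th <> [::] -> prefix th Th ->
  tr w -> prefix s w -> prefix w t -> last 0 th \in ctrl (brd w).
Proof.
move=> [h _] ne pt tw sw wt; apply: (pre_mem (h w tw (conj sw wt))).
apply: (pre_mem pt); move: ne; clear; case/lastP: th => [//|th x _]; by rewrite last_rcons mem_rcons inE eqxx.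
Qed.

Lemma reset_board t r g : prule P t = Some r -> is_reset_of g (proj1_sig r) ->
  covered (brd t) g /\ reset g (brd t) (brd (rcons t 0)).
Proof.
move=> e ir; have [_ [_ [ec [_ pl]]]] := rule_spec e.
have pl0 := pl 0; rewrite /brd -ec pl0; last by case: r e ir ec pl pl0 => -[].
case: r e ir ec pl pl0 => -[G b b'|g' G b b'|G b b'|R b bs] //= v e ir ec _ _.
by subst g'; have [_ [_ [h3 h4]]] := v.
Qed.

Lemma strict_pre_trans (a b c : node) : strict_prefix a b -> prefix b c -> strict_prefix a c.
Proof.
move=> [ab nab] bc; split; first exact: prefix_trans ab bc.
move=> e; subst c; apply: nab; exact: pre_antisym.
Qed.

Lemma no_struct_cycle t s : pbud P t = Some s ->
  exists w, prefix s w /\ strict_prefix w t /\ ~ struct_node P w.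
Proof.
move=> e; case: (xm (exists w, prefix s w /\ strict_prefix w t /\ ~ struct_node P w)) => // nex.
exfalso.
have allst : forall w, prefix s w -> strict_prefix w t -> struct_node P w.
  move=> w h1 h2; case: (xm (struct_node P w)) => // h3; exfalso; apply: nex; by exists w.
have [Th [th [u [r [lc [ne [pt [tu [su [ut [pr ir]]]]]]]]]]] := inv_data e.
set g := last 0 th in ir.
have tt := bud_tr e.
have [_ [ts [_ [[st _] el]]]] := bud_spec e.
have Zprop : forall a w, prefix s a -> prefix a w -> prefix w t -> Zb g (brd a) -> Zb g (brd w).
  move=> a w sa; elim/last_ind: w => [|w j IH] aw wt Za.
    by move: aw; rewrite prefixs0 => /eqP<-.
  case: (pre_rcons_inv aw) => [ea|aw']; first by rewrite -ea.
  have sw' : strict_prefix w t.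
    apply: (strict_pre_trans _ wt); apply/strict_rcons; exact: prefix_refl.
  have sw : prefix s w by exact: prefix_trans sa aw'.
  have stw := allst _ sw sw'.
  have Zw := IH aw' (proj1 sw') Za.
  have [ch _] := struct_arity stw.
  have j0 : j = 0 by apply/ch; exact: tr_pre tt wt.
  subst j; have [b1 [b2 hst]] := struct_board stw.
  apply: (Z_step b1 b2 Zw); case: hst => [h|[h|[g' [_ [h _]]]]]; [by left | by right; left | right; right; by exists g'].
have stu := allst _ su ut.
have [j hj] := strict_child ut.
have [ch _] := struct_arity stu.
have j0 : j = 0 by apply/ch; exact: tr_pre tt hj.
subst j.
have [cov rs] := reset_board pr ir.
have Z1 : Zb g (brd (rcons u 0)).
  have [b1 [b2 _]] := struct_board stu; exact: Z_reset b1 b2 rs.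
have Zt := Zprop _ _ (prefix_trans su (prefix_rcons _ _)) hj (prefix_refl _) Z1.
have Zs : Zb g (brd s) by rewrite /brd -el.
have Zu := Zprop _ _ (prefix_refl _) su (proj1 ut) Zs.
case: cov => gc hc.
have [x [a [S [SS gS]]]] := bon_occ (tr_board tu) gc.
exact: hc _ _ _ SS (Zu _ _ _ SS gS).
Qed.

Lemma nonstruct_ann t r : prule P t = Some r -> ~ struct_node P t ->
  exists R bb bs, proj1_sig r = RAnn R bb bs.
Proof.
move=> e ns; case E: (proj1_sig r) => [G b b'|g G b b'|G b b'|R bb bs];
  try by exfalso; apply: ns; exists r; rewrite E.
by exists R, bb, bs.
Qed.

Section Strip.
Variable P' : preproof D.
Hypothesis SP : is_strip P P'.

Lemma S_tr u : ptree P' u <-> exists t, tr t /\ ~ struct_node P t /\ cf t = u.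
Proof.
case: SP => h _; rewrite h; split.
  move=> [t [tt ct]]; have [w [tw [nw [_ [cw _]]]]] := rep tt.
  by exists w; split=> //; split=> //; rewrite cw (contract_fun ct).
move=> [t [tt [_ <-]]]; exists t; split=> //; exact: contract_cf.
Qed.

Lemma S_node t : tr t -> ~ struct_node P t ->
  plab P' (cf t) = (plab P t).1 /\ prule P' (cf t) = obind (@unann _ _ I) (prule P t) /\
  (pbud P t = None -> pbud P' (cf t) = None) /\
  (forall s, pbud P t = Some s -> pbud P' (cf t) = Some (cf s)).
Proof.
move=> tt nt; case: SP => _ [h _]; have [h1 [h2 [h3 h4]]] := h _ _ tt nt (contract_cf t).
split=> //; split=> //; split=> // s e; have [s' [cs ->]] := h4 _ e.
by rewrite (contract_fun cs).
Qed.

Lemma S_out u : ~ ptree P' u -> pbud P' u = None /\ prule P' u = None.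
Proof. by case: SP => _ [_ h]; exact: h. Qed.

Lemma S_lab t : tr t -> plab P' (cf t) = (plab P t).1.
Proof.
move=> tt; have [w [tw [nw [_ [cw [lw _]]]]]] := rep tt.
by rewrite -cw (S_node tw nw).1 lw.
Qed.

Lemma S_inner u i : ptree P' (rcons u i) -> exists t, tr (rcons t i) /\ ~ struct_node P t /\ cf t = u.
Proof.
move=> /S_tr [t2 [t2t [_ e]]]; have [t' [h1 [h2 [h3 _]]]] := cf_rcons_inv t2t e.
by exists t'.
Qed.

Lemma S_trcf t : tr t -> ptree P' (cf t).
Proof. move=> tt; case: SP => h _; apply/h; exists t; split=> //; exact: contract_cf. Qed.

Lemma S_root : ptree P' [::].
Proof.
have [w [tw [nw [_ [cw _]]]]] := rep tr_root; apply/S_tr; by exists w.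
Qed.

Lemma S_rep u : ptree P' u -> exists t, tr t /\ ~ struct_node P t /\ cf t = u.
Proof. by move/S_tr. Qed.

Lemma S_bud u s' : pbud P' u = Some s' -> exists t s, tr t /\ ~ struct_node P t /\ cf t = u /\
  pbud P t = Some s /\ s' = cf s.
Proof.
move=> e; case: (xm (ptree P' u)) => [pu|npu]; last by rewrite (S_out npu).1 in e.
have [t [tt [nt ct]]] := S_rep pu; subst u.
have [_ [_ [hn hs]]] := S_node tt nt.
case E: (pbud P t) => [s|]; last by rewrite hn in e.
by exists t, s; split=> //; split=> //; split=> //; split=> //; move: e; rewrite (hs _ E) => -[].
Qed.

Lemma S_rule u R : prule P' u = Some R -> exists t r bb bs, tr t /\ ~ struct_node P t /\ cf t = u /\
  prule P t = Some r /\ proj1_sig r = RAnn R bb bs.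
Proof.
move=> e; case: (xm (ptree P' u)) => [pu|npu]; last by rewrite (S_out npu).2 in e.
have [t [tt [nt ct]]] := S_rep pu; subst u.
have [_ [hr _]] := S_node tt nt.
case E: (prule P t) => [r|]; last by rewrite hr E in e.
have [R' [bb [bs er]]] := nonstruct_ann E nt.
move: e; rewrite hr E /= /unann er => -[<-].
by exists t, r, bb, bs.
Qed.

Lemma S_has u : ptree P' u -> (exists s', pbud P' u = Some s') \/ (exists R, prule P' u = Some R).
Proof.
move=> pu; have [t [tt [nt ct]]] := S_rep pu; subst u.
have [_ [hr [hn hs]]] := S_node tt nt.
case: (tr_cases tt) => [[s e]|[r e]]; first by left; exists (cf s); exact: hs.
right; have [R [bb [bs er]]] := nonstruct_ann e nt.
by exists R; rewrite hr e /= /unann er.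
Qed.

Lemma S_preproof : is_preproof P'.
Proof.
split; first exact: S_root.
split.
  by move=> u i /S_inner [t [h1 [h2 h3]]]; apply/S_tr; exists t; split=> //; exact: tr_rcons h1.
split.
  have [l hl] := tr_fin; exists (map cf l) => u /S_rep [t [tt [_ <-]]]; apply: map_f; exact: hl.
split.
  move=> u s' /S_bud [t [s [tt [nt [ct [e es']]]]]]; subst u s'.
  have [[_ lft] [ts [nls [[st nst] el]]]] := bud_spec e.
  have [w [sw [wt nw]]] := no_struct_cycle e.
  split.
    split; first by apply/S_tr; exists t.
    move=> i /S_inner [t' [h1 [h2 h3]]]; have et := cf_inj (tr_rcons h1) tt h2 nt h3.
    by subst t'; exact: lft h1.
  split; first by apply/S_tr; have [w' [tw' [nw' [_ [cw' _]]]]] := rep ts; exists w'.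
  split.
    move=> [_ lf].
    have [ws [tws [nws [sws [cws [_ hws]]]]]] := rep ts.
    case: (chain_prefix tws tt sws st hws) => [wst|tws'].
      case: (xm (ws = t)) => [ewt|nwt].
        subst ws; by apply: nw; apply: hws sw wt.
      have [j hj] := strict_child (conj wst nwt).
      apply: (lf j); have := S_trcf (tr_pre tt hj).
      by rewrite cf_rcons; move/snF/negbTE: nws => ->; rewrite cws.
    have := hws t st tws'; move=> [r [er _]].
    by move: (bud_norule e); rewrite er.
  split.
    split; first exact: cf_pre.
    move=> ec; have h1 := cf_strict wt.1 nw wt.2.
    have := pre_size_le (cf_pre sw); rewrite ec => h2.
    by have := leq_trans h1 h2; rewrite ltnn.
  by rewrite (S_node tt nt).1 (S_lab ts) el.
split.
  move=> u R /S_rule [t [r [bb [bs [tt [nt [ct [e er]]]]]]]]; subst u.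
  have [tr1 [bn [ec [ch pl]]]] := rule_spec e.
  have [lab [ch' pl']] := ann_board e er.
  split; first exact: S_trcf.
  split; first exact: (S_node tt nt).2.2.1.
  split; first by rewrite (S_node tt nt).1 lab.
  split.
    move=> i; split.
      move=> /S_inner [t' [h1 [h2 h3]]]; have et := cf_inj (tr_rcons h1) tt h2 nt h3.
      by subst t'; apply/ch'.
    move=> /ch' hi; have := S_trcf hi.
    by rewrite cf_rcons; move/snF/negbTE: nt => ->.
  move=> i hi; have := S_lab ((ch' i).2 hi).
  by rewrite cf_rcons; move/snF/negbTE: (nt) => ->; rewrite (pl' i hi).1.
move=> u pu nb nr; exfalso.
by case: (S_has pu) => [[s' e]|[R e]]; [rewrite e in nb | rewrite e in nr].
Qed.

Lemma S_af : assumption_free P'.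
Proof.
move=> u pu nb nr.
by case: (S_has pu) => [[s' e]|[R e]]; [rewrite e in nb | rewrite e in nr].
Qed.

Lemma S_rootlab : plab P' [::] = (plab P [::]).1.
Proof. exact: (S_lab tr_root). Qed.
End Strip.

Definition repo (u : node) : option node :=
  match excluded_middle_informative (exists t, tr t /\ ~ struct_node P t /\ cf t = u) with
  | left h => Some (proj1_sig (constructive_indefinite_description _ h))
  | right _ => None
  end.

Lemma repoP u t : repo u = Some t -> tr t /\ ~ struct_node P t /\ cf t = u.
Proof.
rewrite /repo; case: excluded_middle_informative => // h [<-].
by case: constructive_indefinite_description.
Qed.

Lemma repo_some t : tr t -> ~ struct_node P t -> repo (cf t) = Some t.
Proof.
move=> tt nt; rewrite /repo; case: excluded_middle_informative => [h|h]; last first.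
  by exfalso; apply: h; exists t.
congr Some; case: constructive_indefinite_description => t' [h1 [h2 h3]] /=.
exact: cf_inj.
Qed.

Definition Pstrip : preproof D := {|
  ptree := fun u => exists t, tr t /\ contract P t u;
  pbud := fun u => if repo u is Some t then omap cf (pbud P t) else None;
  plab := fun u => if repo u is Some t then (plab P t).1 else (plab P [::]).1;
  prule := fun u => if repo u is Some t then obind (@unann _ _ I) (prule P t) else None |}.

Lemma Pstrip_ok : is_strip P Pstrip.
Proof.
split; first by [].
split.
  move=> t u tt nt ct; rewrite (contract_fun ct) /= (repo_some tt nt).
  split=> //; split=> //; split; first by move=> ->.
  by move=> s ->; exists (cf s); split=> //; exact: contract_cf.
move=> u npu /=; case E: (repo u) => [t|] //; exfalso; apply: npu.
have [tt [_ ct]] := repoP E; exists t; split=> //; rewrite -ct; exact: contract_cf.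
Qed.

Section Branch.
Variable rho : nat -> node.
Hypothesis Hr_tr : forall n, tr (rho n).
Hypothesis Hr_step : forall n,
  (pbud P (rho n) = None /\ exists j, rho n.+1 = rcons (rho n) j) \/
  (pbud P (rho n) = Some (rho n.+1)).

Lemma step_child n : pbud P (rho n) = None -> exists j, rho n.+1 = rcons (rho n) j.
Proof. by move=> e; case: (Hr_step n) => [[_ h]|h] //; rewrite e in h. Qed.

Lemma entry m m' u : m < m' -> ~~ prefix u (rho m) -> prefix u (rho m') ->
  exists m'', m < m'' <= m' /\ rho m'' = u.
Proof.
elim: m' => [//|m' IH] lt nu pu.
case: (boolP ((m < m') && prefix u (rho m'))) => [/andP[lt' pu']|h].
  have [m'' [/andP[h1 h2] e]] := IH lt' nu pu'.
  by exists m''; split=> //; rewrite h1 /= ltnW.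
have nu' : ~~ prefix u (rho m').
  move: h; rewrite negb_and; case/orP=> [h|//].
  have -> : m' = m by lia.
  exact: nu.
case: (Hr_step m') => [[_ [j ej]]|eb].
  rewrite ej in pu; case: (pre_rcons_inv pu) => [eu|pu2]; last by rewrite pu2 in nu'.
  by exists m'.+1; split; [rewrite lt leqnn | rewrite ej eu].
have [_ [_ [_ [[sb _] _]]]] := bud_spec eb.
by move: nu'; rewrite (prefix_trans pu sb).
Qed.

Lemma first_after m (Q : nat -> bool) : (exists m', m < m' /\ ~~ Q m') ->
  exists m1, m < m1 /\ ~~ Q m1 /\ (forall m'', m < m'' < m1 -> Q m'').
Proof.
move=> h.
have ex : exists m', (m < m') && ~~ Q m' by case: h => m' [h1 h2]; exists m'; rewrite h1 h2.
case: (ex_minnP ex) => m1 /andP[h1 h2] hmin.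
exists m1; split=> //; split=> // m'' /andP[a b]; apply/negPn/negP => nq.
by have := hmin m''; rewrite a nq => /(_ isT); rewrite leqNgt b.
Qed.

Lemma fin_io : exists N0, forall m, N0 <= m -> forall M, exists m', M <= m' /\ rho m' = rho m.
Proof.
have [l hl] := tr_fin.
suff : forall l' : seq node, exists N0, forall m, N0 <= m -> rho m \in l' ->
    forall M, exists m', M <= m' /\ rho m' = rho m.
  by move=> /(_ l) [N0 h]; exists N0 => m Nm; apply: h Nm (hl _ (Hr_tr m)).
elim=> [|w l' [N1 IH]]; first by exists 0.
case: (xm (forall M, exists m', M <= m' /\ rho m' = w)) => [io|nio].
  exists N1 => m Nm; rewrite inE => /orP[/eqP e|ml]; last exact: IH.
  by rewrite e.
have [M0 hM0] : exists M0, forall m', M0 <= m' -> rho m' <> w.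
  case: (xm (exists M0, forall m', M0 <= m' -> rho m' <> w)) => // nex; exfalso; apply: nio => M.
  case: (xm (exists m', M <= m' /\ rho m' = w)) => // nex2; exfalso; apply: nex; exists M.
  by move=> m' hm e; apply: nex2; exists m'.
exists (maxn N1 M0) => m; rewrite geq_max => /andP[h1 h2]; rewrite inE => /orP[/eqP e|ml].
  by exfalso; exact: hM0 _ h2 e.
exact: IH.
Qed.

Lemma jump n c : pbud P (rho n) = Some c -> rho n.+1 = c.
Proof. by move=> e; case: (Hr_step n) => [[h _]|h]; rewrite e in h => //; case: h. Qed.

Definition ThI t c th := exists Th, is_lcp P c t Th /\ th <> [::] /\ prefix th Th /\
  exists u r, tr u /\ prefix c u /\ strict_prefix u t /\ prule P u = Some r /\
    is_reset_of (last 0 th) (proj1_sig r).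

Lemma ThI_ex t c : pbud P t = Some c -> exists th, ThI t c th.
Proof.
move=> e; case: RP => _ [_ h]; have [Th [lc [th [ne [pt rest]]]]] := h _ _ e.
by exists th, Th.
Qed.

Definition asb (Q : Prop) : bool := if excluded_middle_informative Q then true else false.
Lemma asbP (Q : Prop) : asb Q <-> Q.
Proof. by rewrite /asb; case: excluded_middle_informative. Qed.

Lemma persist : exists g N, (forall n, N <= n -> g \in ctrl (brd (rho n))) /\
  (forall M, exists n, M <= n /\ N <= n /\
     exists r, prule P (rho n) = Some r /\ is_reset_of g (proj1_sig r)).
Proof.
have [N0 hio] := fin_io.
pose pk k := asb (exists m, N0 <= m /\ size (rho m) = k).
have exk : exists k, pk k by exists (size (rho N0)); apply/asbP; exists N0.
case: (ex_minnP exk) => k0 /asbP [m0 [Nm0 sm0]] hkmin.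
have szge : forall m, N0 <= m -> k0 <= size (rho m).
  by move=> m Nm; apply: hkmin; apply/asbP; exists m.
set ss := rho m0.
have io_ss : forall M, exists m', M <= m' /\ rho m' = ss by exact: hio.
have below : forall m, m0 <= m -> prefix ss (rho m).
  suff : forall d, prefix ss (rho (m0 + d)).
    by move=> h m hm; have := h (m - m0); rewrite subnKC.
  elim=> [|d IH]; first by rewrite addn0 prefix_refl.
  rewrite addnS; case: (Hr_step (m0 + d)) => [[_ [j ->]]|eb].
    exact: prefix_trans IH (prefix_rcons _ _).
  have [_ [_ [_ [[sb _] _]]]] := bud_spec eb.
  case: (pre_comp IH sb) => // h.
  have sz : size (rho (m0 + d).+1) = size ss.
    apply/eqP; rewrite eqn_leq pre_size_le // /ss sm0; apply: szge.
    exact: leq_trans Nm0 (leq_trans (leq_addr d m0) (leqnSn _)).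
  by rewrite (pre_size h (prefix_refl ss) sz) prefix_refl.
pose active t := (exists c, pbud P t = Some c) /\ exists m, m0 <= m /\ rho m = t.
have exit1 : forall m, m0 <= m -> exists t c, pbud P t = Some c /\ active t /\
    prefix c (rho m) /\ prefix (rho m) t.
  move=> m hm; set v := rho m.
  pose Q m'' := prefix v (rho m'') && (rho m'' != v).
  have ex : exists m', m < m' /\ ~~ Q m'.
    have [m' [h1 h2]] := io_ss m.+1; exists m'; split=> //.
    rewrite /Q h2; apply/negP => /andP[vs ne]; move/negP: ne; apply.
    apply/eqP/esym; apply: (pre_size vs (prefix_refl ss)); apply/eqP.
    rewrite eqn_leq pre_size_le //= /ss sm0; apply: szge; exact: leq_trans Nm0 hm.
  have [m1 [h1 [h2 h3]]] := first_after ex.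
  have vw : prefix v (rho m1.-1).
    case: (eqVneq m1.-1 m) => [->|ne]; first exact: prefix_refl.
    have hh : m < m1.-1 < m1 by apply/andP; split; lia.
    by case/andP: (h3 _ hh).
  have em1 : m1 = m1.-1.+1 by lia.
  case: (Hr_step m1.-1) => [[_ [j ej]]|eb].
    exfalso; move/negP: h2; apply; rewrite /Q em1 ej; apply/andP; split.
      exact: prefix_trans vw (prefix_rcons _ _).
    apply/eqP => e; have := pre_size_le vw; rewrite -e size_rcons ltnn //.
  rewrite -em1 in eb.
  have [_ [_ [_ [[sb _] _]]]] := bud_spec eb.
  exists (rho m1.-1), (rho m1); split=> //; split.
    split; first by exists (rho m1).
    by exists m1.-1; split=> //; lia.
  split=> //.
  case: (pre_comp vw sb) => // h.
  move: h2; rewrite /Q h /= => /negPn /eqP ->; exact: prefix_refl.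
have visit : forall t, active t -> forall M, exists m, M <= m /\ m0 <= m /\ rho m = t.
  move=> t [_ [m [hm e]]] M; have [m' [h1 h2]] := hio m (leq_trans Nm0 hm) (maxn M m0).
  by exists m'; split; [exact: leq_trans (leq_maxl _ _) h1 | split; [exact: leq_trans (leq_maxr _ _) h1 | rewrite h2]].
have exit2 : forall t c, pbud P t = Some c -> active t -> c <> ss ->
    exists t' c', pbud P t' = Some c' /\ active t' /\ strict_prefix c' c /\ prefix c t' /\
      prefix ss c'.
  move=> t c e act nc; have [m [_ [hm em]]] := visit t act 0.
  have ec : rho m.+1 = c by apply: jump; rewrite em.
  have ssc : prefix ss c by rewrite -ec; apply: below; exact: leqW.
  pose Q m'' := prefix c (rho m'').
  have ex : exists m', m.+1 < m' /\ ~~ Q m'.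
    have [m' [h1 h2]] := io_ss m.+2; exists m'; split=> //.
    by rewrite /Q h2; apply/negP => h; apply: nc; exact: pre_antisym.
  have [m1 [h1 [h2 h3]]] := first_after ex.
  have vw : prefix c (rho m1.-1).
    case: (eqVneq m1.-1 m.+1) => [->|ne]; first by rewrite ec prefix_refl.
    have hh : m.+1 < m1.-1 < m1 by apply/andP; split; lia.
    exact: (h3 _ hh).
  have em1 : m1 = m1.-1.+1 by lia.
  case: (Hr_step m1.-1) => [[_ [j ej]]|eb].
    by exfalso; move/negP: h2; apply; rewrite /Q em1 ej; exact: prefix_trans vw (prefix_rcons _ _).
  rewrite -em1 in eb.
  have [_ [_ [_ [[sb nsb] _]]]] := bud_spec eb.
  exists (rho m1.-1), (rho m1); split=> //; split.
    split; first by exists (rho m1).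
    by exists m1.-1; split=> //; lia.
  case: (pre_comp vw sb) => h; first by move/negP: h2.
  split; first by split=> // e'; move/negP: h2; apply; rewrite /Q e' prefix_refl.
  split=> //; apply: below; lia.
have [t0 [e0 act0]] : exists t0, pbud P t0 = Some ss /\ active t0.
  have [m' [h1 h2]] := io_ss m0.+1.
  have em' : m' = m'.-1.+1 by lia.
  have bw := below m'.-1 (ltac:(lia)).
  case: (Hr_step m'.-1) => [[_ [j ej]]|eb].
    exfalso; move: (f_equal size ej); rewrite -em' h2 size_rcons => e.
    by have := pre_size_le bw; rewrite -ltnS -e ltnn.
  rewrite -em' h2 in eb; exists (rho m'.-1); split=> //; split; first by exists ss.
  by exists m'.-1; split=> //; lia.
have compss : forall t c, pbud P t = Some c -> active t -> prefix ss c.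
  move=> t c e act; have [m [_ [hm em]]] := visit t act 0.
  have <- : rho m.+1 = c by apply: jump; rewrite em.
  apply: below; exact: leqW.
pose pm k := asb (exists t c th, pbud P t = Some c /\ active t /\ ThI t c th /\ size th = k).
have exm : exists k, pm k.
  have [th hth] := ThI_ex e0; exists (size th); apply/asbP; by exists t0, ss, th.
case: (ex_minnP exm) => k1 /asbP [t1 [c1 [th1 [e1 [act1 [hth1 sz1]]]]]] hmin1.
have hmin : forall t c th, pbud P t = Some c -> active t -> ThI t c th -> k1 <= size th.
  by move=> t c th e act h; apply: hmin1; apply/asbP; exists t, c, th.
pose Good t c := exists th, ThI t c th /\ prefix th1 th.
have prop : forall a ca b cb w, pbud P b = Some cb -> active b -> Good a ca ->
    tr w -> prefix ca w -> prefix w a -> prefix cb w -> prefix w b -> Good b cb.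
  move=> a ca b cb w eb actb [tha [[Tha [lca [nea [pa _]]]] p1]] tw caw wa cbw wb.
  have hw : prefix Tha (ctrl (brd w)) by exact: (proj1 lca) w tw (conj caw wa).
  have [thb hthb] := ThI_ex eb.
  have [Thb [lcb [neb [pb rb]]]] := hthb.
  have hb : prefix Thb (ctrl (brd w)) by exact: (proj1 lcb) w tw (conj cbw wb).
  have p1' := prefix_trans p1 (prefix_trans pa hw).
  have pb' := prefix_trans pb hb.
  have szb := hmin _ _ _ eb actb hthb.
  exists thb; split=> //; case: (pre_comp p1' pb') => // h.
  have e : thb = th1.
    apply: (pre_size h (prefix_refl th1)); apply/eqP; rewrite eqn_leq pre_size_le //= sz1 //.
  by rewrite e prefix_refl.
have [_ [ts0 [_ [[sst0 _] _]]]] := bud_spec e0.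
have tss : tr ss by exact: Hr_tr.
have conn : forall d t c, pbud P t = Some c -> active t -> size c - size ss <= d ->
    (Good t c <-> Good t0 ss).
  elim=> [|d IH] t c e act hd; have [_ [tc [_ [[ct _] _]]]] := bud_spec e;
    have ssc := compss _ _ e act; case: (xm (c = ss)) => [ecs|ncs].
  - subst c; split=> h.
      exact: (prop t ss t0 ss ss e0 act0 h tss (prefix_refl _) ct (prefix_refl _) sst0).
    exact: (prop t0 ss t ss ss e act h tss (prefix_refl _) sst0 (prefix_refl _) ct).
  - exfalso; apply: ncs; apply: (pre_size (prefix_refl c) ssc).
    have := pre_size_le ssc; lia.
  - subst c; split=> h.
      exact: (prop t ss t0 ss ss e0 act0 h tss (prefix_refl _) ct (prefix_refl _) sst0).
    exact: (prop t0 ss t ss ss e act h tss (prefix_refl _) sst0 (prefix_refl _) ct).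
  have [t' [c' [e' [act' [[c'c nc'c] [ct' ssc']]]]]] := exit2 t c e act ncs.
  have szc : size c' < size c.
    rewrite ltn_neqAle pre_size_le // andbT; apply/negP => /eqP h; apply: nc'c.
    exact: pre_size c'c (prefix_refl c) h.
  have hd' : size c' - size ss <= d.
    have := pre_size_le ssc'; lia.
  rewrite -(IH _ _ e' act' hd'); split=> h.
    exact: (prop t c t' c' c e' act' h tc (prefix_refl _) ct c'c ct').
  exact: (prop t' c' t c c e act h tc c'c ct' (prefix_refl _) ct).
have allgood : forall t c, pbud P t = Some c -> active t -> Good t c.
  move=> t c e act; apply/(conn _ t c e act (leqnn _)).
  by apply/(conn _ t1 c1 e1 act1 (leqnn _)); exists th1; split=> //; exact: prefix_refl.
have [Th1 [lc1 [ne1 [p1 [u [r [tu [c1u [ut1 [pr ir]]]]]]]]]] := hth1.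
exists (last 0 th1), m0; split.
  move=> n hn; have [t [c [e [act [cn nt]]]]] := exit1 n hn.
  have [th [[Th [lc [ne [pt _]]]] p1']] := allgood t c e act.
  exact: lcp_mem lc ne1 (prefix_trans p1' pt) (Hr_tr n) cn nt.
move=> M; have [mA [hMA [hmA eA]]] := visit t1 act1 M.
have ecA : rho mA.+1 = c1 by apply: jump; rewrite eA.
have [mB [hmB [_ eB]]] := visit t1 act1 mA.+2.
case: (xm (u = c1)) => [euc|nuc].
  exists mA.+1; split; first exact: leqW.
  split; first exact: leqW.
  by exists r; rewrite ecA -euc.
have nu : ~~ prefix u (rho mA.+1).
  by rewrite ecA; apply/negP => h; apply: nuc; exact: pre_antisym.
have lAB : mA.+1 < mB by lia.
have puB : prefix u (rho mB) by rewrite eB; exact: ut1.1.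
have [n [/andP[h1 h2] en]] := entry lAB nu puB.
exists n; split; first lia.
split; first lia.
by exists r; rewrite en.
Qed.
End Branch.

Section Lift.
Variable P' : preproof D.
Hypothesis SP : is_strip P P'.
Variable pi : nat -> node.
Hypothesis Hpi : is_branch P' pi.

Let PP' := S_preproof SP.

Fixpoint lift (n : nat) : node * nat :=
  match n with
  | 0 => ([::], 0)
  | n'.+1 => let (t, k) := lift n' in
      if sn t then (rcons t 0, k) else
      match pbud P t with
      | Some s => (s, k.+1)
      | None => (rcons t (last 0 (pi k.+1)), k.+1)
      end
  end.

Definition rho n := (lift n).1.
Definition kk n := (lift n).2.

Lemma lift_S n : lift n.+1 =
  if sn (rho n) then (rcons (rho n) 0, kk n) else
  match pbud P (rho n) with
  | Some s => (s, (kk n).+1)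
  | None => (rcons (rho n) (last 0 (pi (kk n).+1)), (kk n).+1)
  end.
Proof. by rewrite /rho /kk /=; case: (lift n). Qed.

Lemma P'bud u s' : pbud P' u = Some s' -> is_leaf P' u.
Proof. by case: PP' => _ [_ [_ [h _]]] e; case: (h _ _ e). Qed.

Lemma lift_inv n : tr (rho n) /\ cf (rho n) = pi (kk n).
Proof.
elim: n => [|n [tn cn]].
  by split; [exact: tr_root | case: Hpi => ->].
have [_ hb] := Hpi; have [hnl hl] := hb (kk n).
rewrite /rho /kk lift_S.
case: (boolP (sn (rho n))) => [/snP st|/snF nt] /=.
  have [ch _] := struct_arity st.
  by split; [exact/ch | rewrite cf_rcons (proj2 (snP _) st)].
have [_ [hr [hn hs]]] := S_node SP tn nt.
case eb: (pbud P (rho n)) => [s|] /=.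
  have [_ [ts _]] := bud_spec eb.
  have e' := hs _ eb; rewrite cn in e'.
  have := hl (P'bud e'); rewrite e' => -[<-]; by split.
have [r er] : exists r, prule P (rho n) = Some r.
  by case E: (prule P (rho n)) => [r|]; [exists r | exfalso; exact: (AF tn eb E)].
have [R [bb [bs eR]]] := nonstruct_ann er nt.
have [lab [ch _]] := ann_board er eR.
have nb' := hn eb; rewrite cn in nb'.
have nl : ~ is_leaf P' (pi (kk n)) by move/hl; rewrite nb'.
have [j [ej pj]] := hnl nl.
have rR : prule P' (pi (kk n)) = Some R by rewrite -cn hr er /= /unann eR.
have [_ [_ [_ [chR _]]]] := (proj1 (proj2 (proj2 (proj2 (proj2 PP'))))) _ _ rR.
rewrite ej last_rcons in pj *.
have hj : j < darity R by apply/chR.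
split; first exact/ch.
by rewrite cf_rcons; move/negbTE: (proj2 (snF _) nt) => ->; rewrite cn.
Qed.

Lemma rho_S n : rho n.+1 = if sn (rho n) then rcons (rho n) 0 else
  match pbud P (rho n) with Some s => s | None => rcons (rho n) (last 0 (pi (kk n).+1)) end.
Proof. by rewrite {1}/rho lift_S; case: (sn _) => //; case: (pbud _ _). Qed.

Lemma kk_S n : kk n.+1 = if sn (rho n) then kk n else (kk n).+1.
Proof. by rewrite {1}/kk lift_S; case: (sn _) => //; case: (pbud _ _). Qed.

Lemma rho_step n : (pbud P (rho n) = None /\ exists j, rho n.+1 = rcons (rho n) j) \/
  (pbud P (rho n) = Some (rho n.+1)).
Proof.
rewrite rho_S; case: (boolP (sn (rho n))) => [/snP st|/snF nt] /=.
  left; split; last by exists 0.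
  by case: st => r [e _]; have [_ [h _]] := rule_spec e.
case eb: (pbud P (rho n)) => [s|] /=; first by right.
by left; split=> //; eexists.
Qed.

Definition domP n := iobj I (sqt (rho n)).
Definition bP n := brd (rho n).
Definition tauP n (x : Pos I) (c : A) (y : Pos I) : Prop :=
  if sn (rho n) then (x = y /\ c = azero A /\ domP n x)
  else branch_mor (I:=I) P' pi (kk n) x c y.

Lemma hstepP n :
  (Tid domP tauP n /\ (bP n.+1 = bP n \/ weakening (bP n) (bP n.+1) \/
     population (bP n) (bP n.+1) \/
     exists g, covered (bP n) g /\ reset g (bP n) (bP n.+1)))
  \/ successor (tauP n) (bP n) (bP n.+1).
Proof.
have [tn cn] := lift_inv n.
have [tn1 cn1] := lift_inv n.+1.
have er := rho_S n; have ek := kk_S n.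
case: (boolP (sn (rho n))) => [sst|/snF nt].
  have st := proj1 (snP _) sst.
  rewrite sst in er; left; split.
    by move=> x c y; rewrite /tauP sst.
  have [_ [_ h]] := struct_board st; rewrite /bP er.
  case: h => [h|[h|[g [h1 [h2 _]]]]]; [right; left | right; right; left | right; right; right; exists g] => //.
have nsn : sn (rho n) = false by apply/negbTE/snF.
rewrite nsn in er ek.
have [hl [hr [hn hs]]] := S_node SP tn nt.
case eb: (pbud P (rho n)) => [s|] in er *.
  left; split.
    move=> x c y; rewrite /tauP nsn; split.
      case=> [[j [R [_ [e _]]]]|[_ [-> [-> h]]]].
        by rewrite -cn hr (bud_norule eb) in e.
      by split=> //; split=> //; move: h; rewrite -cn hl.
    move=> [-> [-> h]]; right; split.
      by rewrite -cn (hs _ eb) -ek -cn1 er.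
    by split=> //; split=> //; rewrite -cn hl.
  by left; rewrite /bP er /brd; have [_ [_ [_ [_ ->]]]] := bud_spec eb.
right.
have [r er0] : exists r, prule P (rho n) = Some r.
  by case E: (prule P (rho n)) => [r|]; [exists r | exfalso; exact: (AF tn eb E)].
have [R [bb [bs eR]]] := nonstruct_ann er0 nt.
have [lab [ch pl]] := ann_board er0 eR.
set j := last 0 (pi (kk n).+1) in er.
have hj : j < darity R by apply/ch; rewrite -er.
have [l1 [bo1 sc]] := pl j hj.
have rR : prule P' (cf (rho n)) = Some R by rewrite hr er0 /= /unann eR.
have epi : pi (kk n).+1 = rcons (pi (kk n)) j.
  by rewrite -ek -cn1 er cf_rcons nsn cn.
have eq : forall x c y, imor I R j x c y <-> tauP n x c y.
  move=> x c y; rewrite /tauP nsn; split.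
    by move=> h; left; exists j, R; split=> //; split=> //; rewrite -cn.
  case=> [[j' [R' [e1 [e2 e3]]]]|[e _]].
    move: e1; rewrite epi => /eqP; rewrite eqseq_rcons => /andP[_ /eqP ej]; subst j'.
    by move: e2; rewrite -cn rR => -[eRR]; rewrite eRR.
  by rewrite -cn (hn eb) in e.
rewrite /bP er /brd l1 lab /=.
move: sc; rewrite /successor => -[sstar [nu [old [newc [h1 rest]]]]].
exists sstar, nu, old, newc; split=> // y a S; rewrite h1; split.
  by move=> [x [b0 [c [h2 [h3 h4]]]]]; exists x, b0, c; split=> //; split=> //; apply/eq.
by move=> [x [b0 [c [h2 [h3 h4]]]]]; exists x, b0, c; split=> //; split=> //; apply/eq.
Qed.

Lemma kk_mono m n : m <= n -> kk m <= kk n.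
Proof.
move=> /subnKC <-; elim: (n - m) => [|d IH]; first by rewrite addn0.
rewrite addnS kk_S; case: (sn _) => //; exact: leq_trans IH (leqnSn _).
Qed.

Lemma seg_tr m L x v z : segcomp tauP m L x v z ->
  segcomp (branch_mor (I:=I) P' pi) (kk m) (kk (m + L) - kk m) x v z.
Proof.
elim: L v z => [|L IH] v z.
  by rewrite addn0 subnn.
move=> [y [a [b0 [h1 [h2 ->]]]]].
have IH' := IH _ _ h1.
rewrite addnS kk_S; move: h2; rewrite /tauP; case: (sn (rho (m + L))).
  by move=> [<- [-> _]]; rewrite ajoin_0r.
move=> h2; have mm : m <= m + L by lia.
exact: (seg_ext (kk_mono mm) IH' h2).
Qed.

Lemma branch_trace : trace_cond (branch_dom (I:=I) P' pi) (branch_mor (I:=I) P' pi).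
Proof.
have [g [N [gin io]]] := persist (fun n => (lift_inv n).1) rho_step.
have dfin : forall n, exists l, forall x, domP n x -> List.In x l.
  by move=> n; exact: iobj_fin.
have bon : forall n, board_on (domP n) (bP n) by move=> n; exact: tr_board (lift_inv n).1.
have io' : forall M, exists n, M <= n /\ N <= n /\ isR domP bP tauP g n.
  move=> M; have [n [h1 [h2 [r [pr ir]]]]] := io M.
  exists n; split=> //; split=> //.
  have st : struct_node P (rho n).
    by exists r; split=> //; case: (proj1_sig r) ir.
  have sst : sn (rho n) by apply/snP.
  split; first by move=> x c y; rewrite /tauP sst.
  have [cov rs] := reset_board pr ir.
  by rewrite /bP rho_S sst.
have [k [sq [hk hs]]] := core_trace dfin bon hstepP gin io'.
exists (fun i => kk (k i)), sq; split.
  move=> i; have [_ sg] := hs i.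
  have := seg_tr sg; rewrite subnKC; last exact: ltnW.
  have mono := kk_mono (ltnW (hk i)).
  rewrite leq_eqVlt in mono; case/orP: mono => [/eqP <-|//].
  rewrite subnn /= => -[_ e]; exfalso; exact: aalpha_neq0 e.
move=> i; have [d sg] := hs i; split.
  rewrite /branch_dom; have [_ cn] := lift_inv (k i); rewrite -cn (S_lab SP (lift_inv (k i)).1).
  exact: d.
have := seg_tr sg; rewrite subnKC //; exact: ltnW.
Qed.
End Lift.
End Main.

Theorem mainTheorem9 (D : DerivSys) (A : ActAlg) (I : TraceInterp D A)
    (P : preproof (RSys I)) :
  reset_proof P ->
  (exists P' : preproof D, is_strip P P') /\
  (forall P' : preproof D, is_strip P P' ->
     trace_proof I P' /\ plab P' [::] = (plab P [::]).1).
Proof.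
move=> RP; split; first by eexists; exact: Pstrip_ok.
move=> P' SP; split; last exact: (S_rootlab RP SP).
split; first exact: (S_preproof RP SP).
split; first exact: (S_af RP SP).
move=> pi Hpi; exact: (branch_trace RP SP Hpi).
Qed.
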